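(* Let $q>1$, $p=\frac{q}{q-1}$, and assume Hypothesis (H$_q$). Then for all $x\in[a,b]$ and $\theta>0$, $$\Big|\frac{(x-a)^\theta f(ma)+(b-x)^\theta f(mb)}{b-a}-\frac{\Gamma(\theta+1)}{m^\theta(b-a)}\Big[J^\theta_{(mx)^-}f(ma)+J^\theta_{(mx)^+}f(mb)\Big]\Big|$$ $$\le\frac{m\big(\frac1\theta\beta(p+1,\frac1\theta)\big)^{\frac1p}}{b-a}\Big\{(x-a)^{\theta+1}\Big(\frac{|f'(mx)|^q+\alpha m|f'(a)|^q}{\alpha+1}\Big)^{\frac1q}+(b-x)^{\theta+1}\Big(\frac{|f'(mx)|^q+\alpha m|f'(b)|^q}{\alpha+1}\Big)^{\frac1q}\Big\}.$$
   Context: Let $\Gamma$ denote Euler's Gamma function and $\beta(u,v)=\int_0^1t^{u-1}(1-t)^{v-1}dt$ the Beta function. For $\theta>0$ and $x\in[a,b]$: $J^\theta_{(mx)^-}f(ma)=\frac{1}{\Gamma(\theta)}\int_{ma}^{mx}(s-ma)^{\theta-1}f(s)\,ds$ and $J^\theta_{(mx)^+}f(mb)=\frac{1}{\Gamma(\theta)}\int_{mx}^{mb}(mb-s)^{\theta-1}f(s)\,ds$ (each equal to $0$ if its interval of integration is degenerate). $(\alpha,m)$-convexity: for $(\alpha,m)\in[0,1]\times(0,1]$ and an interval $K\subseteq[0,\infty)$, a function $g:K\to\mathbb{R}$ is $(\alpha,m)$-convex on $K$ if $g(tX+m(1-t)Y)\le t^\alpha g(X)+m(1-t^\alpha)g(Y)$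 for all $X,Y\in K$ and $t\in[0,1]$ with $tX+m(1-t)Y\in K$ (convention $0^0=1$). Hypothesis (H$_q$): $I\subseteq[0,\infty)$ is an interval, $f:I\to\mathbb{R}$ is differentiable on the interior $I^\circ$, $m\in(0,1]$, $\alpha\in[0,1]$, $a<b$ with $ma,b\in I^\circ$, $f'$ is Lebesgue integrable on $[ma,mb]$, and $|f'|^q$ is $(\alpha,m)$-convex on $[ma,b]$. *)

(* Defs.v *)
From Stdlib Require Import Reals Lra ClassicalEpsilon.
Open Scope R_scope.

(* Real power x^y for x >= 0, with the conventions 0^y = 0 for y <> 0 and
   0^0 = 1 (the paper's convention).  For x > 0 it is exp (y ln x). *)
Definition rpow (x y : R) : R :=
  if Rlt_dec 0 x then Rpower x y
  else if Req_EM_T y 0 then 1 else 0.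

Definition improper_int (f : R -> R) (a b l : R) : Prop :=
  (forall c d, a < c -> c <= d -> d < b -> inhabited (Riemann_integrable f c d)) /\
  forall eps, 0 < eps -> exists delta, 0 < delta /\
    forall c d (pr : Riemann_integrable f c d),
      a < c < a + delta -> b - delta < d < b -> Rabs (RiemannInt pr - l) < eps.

Definition improper_int_0inf (f : R -> R) (l : R) : Prop :=
  (forall c d, 0 < c -> c <= d -> inhabited (Riemann_integrable f c d)) /\
  forall eps, 0 < eps -> exists delta, 0 < delta /\ exists M,
    forall c d (pr : Riemann_integrable f c d),
      0 < c < delta -> M < d -> Rabs (RiemannInt pr - l) < eps.

(* The value of the integral (chosen by Hilbert's epsilon; the limit is unique). *)
Definition ImpInt (f : R -> R) (a b : R) : R :=
  epsilon (inhabits 0) (fun l => improper_int f a b l).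

Definition ImpInt_0inf (f : R -> R) : R :=
  epsilon (inhabits 0) (fun l => improper_int_0inf f l).

Definition Gamma (u : R) : R :=
  ImpInt_0inf (fun t => rpow t (u - 1) * exp (- t)).

Definition Beta (u v : R) : R :=
  ImpInt (fun t => rpow t (u - 1) * rpow (1 - t) (v - 1)) 0 1.

(* J^theta_{(X)^-} f(A) = 1/Gamma(theta) int_A^X (s-A)^(theta-1) f(s) ds,
   0 if the interval is degenerate. *)
Definition Jleft (theta : R) (f : R -> R) (A X : R) : R :=
  if Rlt_dec A X then / Gamma theta * ImpInt (fun s => rpow (s - A) (theta - 1) * f s) A X
  else 0.

(* J^theta_{(X)^+} f(B) = 1/Gamma(theta) int_X^B (B-s)^(theta-1) f(s) ds,
   0 if the interval is degenerate. *)
Definition Jright (theta : R) (f : R -> R) (X B : R) : R :=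
  if Rlt_dec X B then / Gamma theta * ImpInt (fun s => rpow (B - s) (theta - 1) * f s) X B
  else 0.

Definition is_interval (I : R -> Prop) : Prop :=
  forall x y z, I x -> I z -> x <= y <= z -> I y.

Definition alpha_m_convex (alpha m : R) (K : R -> Prop) (g : R -> R) : Prop :=
  forall X Y t, K X -> K Y -> 0 <= t <= 1 -> K (t * X + m * (1 - t) * Y) ->
    g (t * X + m * (1 - t) * Y) <= rpow t alpha * g X + m * (1 - rpow t alpha) * g Y.

(* Main.v *)
Require Import Defs.
From Stdlib Require Import Reals Rtopology Lra ClassicalEpsilon FunctionalExtensionality.
From Coquelicot Require Import Coquelicot.
Open Scope R_scope.


Lemma locally_R (x : R) (P : R -> Prop) :
  (exists d, 0 < d /\ forall y, Rabs (y - x) < d -> P y) -> locally x P.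
Proof.
  intros [d [Hd H]]. exists (mkposreal d Hd). intros y Hy. apply H. exact Hy.
Qed.

Lemma locally_R_inv (x : R) (P : R -> Prop) :
  locally x P -> exists d, 0 < d /\ forall y, Rabs (y - x) < d -> P y.
Proof.
  intros [d H]. exists d. split. apply cond_pos. intros y Hy. apply H. exact Hy.
Qed.

Lemma cont_ed (f : R -> R) (x : R) :
  (forall eps, 0 < eps -> exists d, 0 < d /\ forall y, Rabs (y - x) < d -> Rabs (f y - f x) < eps) ->
  continuous f x.
Proof.
  intros H. apply continuity_pt_filterlim. intros eps Heps.
  destruct (H eps Heps) as [d [Hd Hf]]. exists d. split; auto.
  intros y [_ Hy]. apply Hf. exact Hy.
Qed.

Lemma cont_ed_inv (f : R -> R) (x : R) : continuous f x ->
  forall eps, 0 < eps -> exists d, 0 < d /\ forall y, Rabs (y - x) < d -> Rabs (f y - f x) < eps.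
Proof.
  intros H eps Heps. apply continuity_pt_filterlim in H.
  destruct (H eps Heps) as [d [Hd Hf]]. exists d. split; auto.
  intros y Hy. destruct (Req_dec y x) as [->|Hne].
  - unfold Rminus. rewrite Rplus_opp_r, Rabs_R0. exact Heps.
  - apply Hf. split. split. exact I. auto. exact Hy.
Qed.

Lemma rpow_pos x y : 0 < x -> rpow x y = Rpower x y.
Proof. intros H. unfold rpow. destruct (Rlt_dec 0 x); [reflexivity|lra]. Qed.

Lemma rpow_nonpos x y : x <= 0 -> y <> 0 -> rpow x y = 0.
Proof. intros H H'. unfold rpow. destruct (Rlt_dec 0 x); [lra|].
  destruct (Req_EM_T y 0); [contradiction|reflexivity]. Qed.

Lemma rpow_0 y : y <> 0 -> rpow 0 y = 0.
Proof. intros; apply rpow_nonpos; lra. Qed.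

Lemma rpow_y0 x : rpow x 0 = 1.
Proof. unfold rpow. destruct (Rlt_dec 0 x). apply Rpower_O; auto.
  destruct (Req_EM_T 0 0); [reflexivity|lra]. Qed.

Lemma rpow_ge0 x y : 0 <= rpow x y.
Proof. unfold rpow. destruct (Rlt_dec 0 x). unfold Rpower. left; apply exp_pos.
  destruct (Req_EM_T y 0); lra. Qed.

Lemma rpow_gt0 x y : 0 < x -> 0 < rpow x y.
Proof. intros H. rewrite rpow_pos by auto. unfold Rpower. apply exp_pos. Qed.

Lemma rpow_1 x : 0 <= x -> rpow x 1 = x.
Proof. intros H. destruct (Rle_lt_or_eq_dec 0 x H).
  rewrite rpow_pos by auto. apply Rpower_1; auto. subst. apply rpow_0; lra. Qed.

Lemma rpow_mult_distr x y e : 0 <= x -> 0 <= y -> rpow (x * y) e = rpow x e * rpow y e.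
Proof. intros Hx Hy.
  destruct (Req_dec e 0) as [->|He]. rewrite !rpow_y0; ring.
  destruct (Rle_lt_or_eq_dec 0 x Hx) as [Hx'|<-].
  2: { rewrite Rmult_0_l, !rpow_0; auto; ring. }
  destruct (Rle_lt_or_eq_dec 0 y Hy) as [Hy'|<-].
  2: { rewrite Rmult_0_r, !rpow_0; auto; ring. }
  rewrite !rpow_pos; auto. rewrite Rpower_mult_distr; auto. apply Rmult_lt_0_compat; auto.
Qed.

Lemma rpow_plus x a b : 0 < x -> rpow x (a + b) = rpow x a * rpow x b.
Proof. intros H. rewrite !rpow_pos; auto. apply Rpower_plus. Qed.

Lemma rpow_rpow x a b : 0 <= x -> a <> 0 -> rpow (rpow x a) b = rpow x (a * b).
Proof. intros Hx Ha. destruct (Rle_lt_or_eq_dec 0 x Hx) as [Hx'|<-].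
  rewrite (rpow_pos x a), (rpow_pos x (a*b)), rpow_pos; auto. apply Rpower_mult.
  unfold Rpower; apply exp_pos.
  rewrite (rpow_0 a); auto. destruct (Req_dec b 0) as [->|Hb].
  rewrite Rmult_0_r, !rpow_y0. auto.
  rewrite !rpow_0; auto.
Qed.

Lemma rpow_inv_pow x q : 0 <= x -> q <> 0 -> rpow (rpow x q) (/ q) = x.
Proof. intros Hx Hq. rewrite rpow_rpow; auto. rewrite Rinv_r; auto. apply rpow_1; auto. Qed.

Lemma rpow_le_base x y e : 0 <= e -> 0 <= x <= y -> rpow x e <= rpow y e.
Proof. intros He [Hx Hxy]. destruct (Req_dec e 0) as [->|He0]. rewrite !rpow_y0; lra.
  destruct (Rle_lt_or_eq_dec 0 x Hx) as [Hx'|<-].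
  rewrite !rpow_pos; try lra. apply Rle_Rpower_l; lra.
  rewrite rpow_0; auto. apply rpow_ge0. Qed.

Lemma rpow_lt_base x y e : 0 < e -> 0 <= x < y -> rpow x e < rpow y e.
Proof. intros He [Hx Hxy].
  destruct (Rle_lt_or_eq_dec 0 x Hx) as [Hx'|<-].
  rewrite !rpow_pos; try lra. apply Rlt_Rpower_l; lra.
  rewrite rpow_0 by lra. apply rpow_gt0; lra. Qed.

Lemma rpow_1base e : rpow 1 e = 1.
Proof. rewrite rpow_pos by lra. unfold Rpower. rewrite ln_1, Rmult_0_r, exp_0. auto. Qed.

Lemma rpow_le1 x e : 0 <= e -> 0 <= x <= 1 -> rpow x e <= 1.
Proof. intros He Hx. rewrite <- (rpow_1base e). apply rpow_le_base; lra. Qed.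

Lemma rpow_derive x y : 0 < x -> is_derive (fun z => rpow z y) x (y * rpow x (y - 1)).
Proof. intros Hx. rewrite (rpow_pos x (y-1)) by auto.
  apply (is_derive_ext_loc (fun z => Rpower z y)).
  apply locally_R. exists x. split; auto. intros z Hz. rewrite rpow_pos; auto.
  apply Rabs_def2 in Hz. lra.
  apply is_derive_Reals. apply derivable_pt_lim_power. auto. Qed.

Lemma rpow_cont_pos x y : 0 < x -> continuous (fun z => rpow z y) x.
Proof. intros Hx. apply (ex_derive_continuous (K:=R_AbsRing) (V:=R_NormedModule)). eexists. apply rpow_derive. auto. Qed.

Lemma rpow_cont_neg x y : x < 0 -> continuous (fun z => rpow z y) x.
Proof. intros Hx. apply cont_ed. intros eps He. exists (-x). split. lra.
  intros z Hz. apply Rabs_def2 in Hz.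
  unfold rpow. destruct (Rlt_dec 0 z); [lra|]. destruct (Rlt_dec 0 x); [lra|].
  unfold Rminus. rewrite Rplus_opp_r, Rabs_R0. auto. Qed.

Lemma rpow_cont_0 y : 0 < y -> continuous (fun z => rpow z y) 0.
Proof. intros Hy. apply cont_ed. intros eps He. exists (Rpower eps (/ y)). split.
  unfold Rpower; apply exp_pos.
  intros z Hz. rewrite (rpow_0) by lra. rewrite Rminus_0_r in *.
  rewrite Rabs_right by (apply Rle_ge, rpow_ge0).
  destruct (Rle_lt_dec z 0). rewrite rpow_nonpos; lra.
  rewrite Rabs_right in Hz by lra. rewrite rpow_pos by lra.
  replace eps with (Rpower (Rpower eps (/y)) y).
  apply Rlt_Rpower_l; lra. rewrite Rpower_mult, Rinv_l by lra. apply Rpower_1; auto. Qed.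

Lemma rpow_cont x y : 0 <= y -> continuous (fun z => rpow z y) x.
Proof. intros Hy. destruct (Req_dec y 0) as [->|Hy0].
  apply (continuous_ext (fun _ => 1)). intros; rewrite rpow_y0; auto. apply continuous_const.
  destruct (Rtotal_order x 0) as [H|[->|H]].
  apply rpow_cont_neg; auto. apply rpow_cont_0; lra. apply rpow_cont_pos; auto. Qed.

Lemma rpow_cont_ne0 x y : x <> 0 -> continuous (fun z => rpow z y) x.
Proof. intros H. destruct (Rtotal_order x 0) as [H'|[H'|H']].
  apply rpow_cont_neg; auto. lra. apply rpow_cont_pos; auto. Qed.


Lemma cplus (f g : R -> R) x : continuous f x -> continuous g x -> continuous (fun y => f y + g y) x.
Proof. intros; apply (continuous_plus f g); auto. Qed.
Lemma cminus (f g : R -> R) x : continuous f x -> continuous g x -> continuous (fun y => f y - g y) x.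
Proof. intros; apply (continuous_minus f g); auto. Qed.
Lemma cmult (f g : R -> R) x : continuous f x -> continuous g x -> continuous (fun y => f y * g y) x.
Proof. intros; apply (continuous_mult f g); auto. Qed.
Lemma copp (f : R -> R) x : continuous f x -> continuous (fun y => - f y) x.
Proof. intros; apply (continuous_opp f); auto. Qed.
Lemma ccomp (f g : R -> R) x : continuous f x -> continuous g (f x) -> continuous (fun y => g (f y)) x.
Proof. intros; apply (continuous_comp f g); auto. Qed.
Lemma cconst (c : R) x : continuous (fun _ : R => c) x.
Proof. apply continuous_const. Qed.
Lemma cid x : continuous (fun y : R => y) x.
Proof. apply continuous_id. Qed.
Lemma cabs (f : R -> R) x : continuous f x -> continuous (fun y => Rabs (f y)) x.
Proof. intros H. apply (ccomp f Rabs); auto. apply continuity_pt_filterlim.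
  apply Rcontinuity_abs. Qed.

Lemma derive_cont (f : R -> R) x l : derivable_pt_lim f x l -> continuous f x.
Proof. intros H. apply (ex_derive_continuous (K:=R_AbsRing) (V:=R_NormedModule)).
  exists l. apply is_derive_Reals. auto. Qed.

Lemma cont_bound (f : R -> R) a b : a <= b -> (forall z, a <= z <= b -> continuous f z) ->
  exists M, 0 <= M /\ forall z, a <= z <= b -> Rabs (f z) <= M.
Proof. intros Hab Hc.
  destruct (continuity_ab_maj (fun z => Rabs (f z)) a b Hab) as [Mx [H1 H2]].
  intros c Hc'. apply continuity_pt_filterlim. apply cabs. auto.
  exists (Rabs (f Mx)). split. apply Rabs_pos. auto. Qed.

Lemma exRInt_cont (f : R -> R) a b : a <= b -> (forall z, a <= z <= b -> continuous f z) -> ex_RInt f a b.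
Proof. intros Hab H. apply (ex_RInt_continuous (V:=R_CompleteNormedModule)). intros z Hz.
  rewrite Rmin_left, Rmax_right in Hz by lra. auto. Qed.

Lemma RInt_abs_small (f : R -> R) a c M : a <= c -> ex_RInt f a c ->
  (forall z, a <= z <= c -> Rabs (f z) <= M) -> Rabs (RInt f a c) <= (c - a) * M.
Proof. intros. apply abs_RInt_le_const; auto. Qed.

Lemma abs4 X Y U W P Q : Rabs (X + (Q - P) + Y - (W - U)) <= Rabs X + Rabs Y + Rabs (P - U) + Rabs (Q - W).
Proof. replace (X + (Q - P) + Y - (W - U)) with (X + Y + (- (P - U)) + (Q - W)) by ring.
  eapply Rle_trans. apply Rabs_triang. apply Rplus_le_compat_r.
  eapply Rle_trans. apply Rabs_triang. rewrite Rabs_Ropp. apply Rplus_le_compat_r.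
  apply Rabs_triang. Qed.

Lemma FTC_open (F f : R -> R) a b : a < b ->
  (forall z, a <= z <= b -> continuous f z) ->
  continuous F a -> continuous F b ->
  (forall z, a < z < b -> derivable_pt_lim F z (f z)) ->
  RInt f a b = F b - F a.
Proof.
  intros Hab Hf HFa HFb HF.
  destruct (cont_bound f a b) as [M [HM0 HM]]; try lra; auto.
  apply Rminus_diag_uniq. apply Rabs_eq_0. apply Rle_antisym; [|apply Rabs_pos].
  apply Rnot_lt_le. intros Hpos. set (e := Rabs (RInt f a b - (F b - F a))) in *.
  destruct (cont_ed_inv F a HFa (e/4)) as [d1 [Hd1 H1]]; try lra.
  destruct (cont_ed_inv F b HFb (e/4)) as [d2 [Hd2 H2]]; try lra.
  set (d := Rmin (Rmin d1 d2) (Rmin ((b-a)/3) (e / (4 * (M+1))))).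
  assert (Hd : 0 < d). { unfold d. repeat apply Rmin_pos; try lra.
    apply Rdiv_lt_0_compat; lra. }
  assert (Hdd1 : d <= d1) by (unfold d; eauto using Rle_trans, Rmin_l).
  assert (Hdd2 : d <= d2) by (unfold d; eapply Rle_trans; [apply Rmin_l|apply Rmin_r]).
  assert (Hdd3 : d <= (b-a)/3) by (unfold d; eapply Rle_trans; [apply Rmin_r|apply Rmin_l]).
  assert (Hdd4 : d <= e / (4 * (M+1))) by (unfold d; eapply Rle_trans; [apply Rmin_r|apply Rmin_r]).
  set (c := a + d/2). set (c' := b - d/2).
  assert (Hi : forall u v, a <= u -> u <= v -> v <= b -> ex_RInt f u v).
  { intros u v ? ? ?. apply exRInt_cont; auto. intros; apply Hf; lra. }
  assert (Hmid : RInt f c c' = F c' - F c).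
  { assert (H := is_RInt_derive F f c c'). apply is_RInt_unique in H. exact H.
    intros x Hx. rewrite Rmin_left, Rmax_right in Hx by (unfold c, c'; lra).
    apply is_derive_Reals. apply HF. unfold c, c' in *; lra.
    intros x Hx. rewrite Rmin_left, Rmax_right in Hx by (unfold c, c'; lra). apply Hf. unfold c, c' in *; lra. }
  assert (Hsplit : RInt f a b = RInt f a c + RInt f c c' + RInt f c' b).
  { rewrite <- (RInt_Chasles f a c b), <- (RInt_Chasles f c c' b); try (apply Hi; unfold c, c'; lra).
    unfold plus; simpl; ring. }
  assert (Ha : Rabs (RInt f a c) <= (c - a) * M).
  { apply RInt_abs_small; try (apply Hi; unfold c; lra). unfold c; lra. intros; apply HM; unfold c in *; lra. }
  assert (Hb : Rabs (RInt f c' b) <= (b - c') * M).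
  { apply RInt_abs_small; try (apply Hi; unfold c'; lra). unfold c'; lra. intros; apply HM; unfold c' in *; lra. }
  assert (HFc : Rabs (F c - F a) < e/4). { apply H1. unfold c. rewrite Rabs_right; lra. }
  assert (HFc' : Rabs (F c' - F b) < e/4). { apply H2. unfold c'. rewrite Rabs_left; lra. }
  assert (HdM : d * M <= e/4).
  { assert (d * (M+1) <= e/4). { apply Rmult_le_reg_r with (/(M+1)). apply Rinv_0_lt_compat; lra.
      rewrite Rmult_assoc, Rinv_r by lra. unfold Rdiv in Hdd4. rewrite Rinv_mult in Hdd4. lra. }
    nra. }
  assert (e <= Rabs (RInt f a c) + Rabs (RInt f c' b) + Rabs (F c - F a) + Rabs (F c' - F b)).
  { unfold e. rewrite Hsplit, Hmid. apply abs4. }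
  assert ((c - a) * M <= e/4) by (unfold c; nra).
  assert ((b - c') * M <= e/4) by (unfold c'; nra).
  lra.
Qed.


Lemma Rabs_triang_minus' x y : Rabs (x - y) <= Rabs x + Rabs y.
Proof. unfold Rminus. eapply Rle_trans. apply Rabs_triang. rewrite Rabs_Ropp. lra. Qed.

Lemma RI_FTC (F f : R -> R) c d (pr : Riemann_integrable f c d) : c <= d ->
  (forall z, c <= z <= d -> derivable_pt_lim F z (f z) /\ continuous f z) ->
  RiemannInt pr = F d - F c.
Proof. intros Hcd H. rewrite <- RInt_Reals.
  assert (H' := is_RInt_derive F f c d). apply is_RInt_unique in H'. exact H'.
  intros x Hx. rewrite Rmin_left, Rmax_right in Hx by lra. apply is_derive_Reals. apply H; lra.
  intros x Hx. rewrite Rmin_left, Rmax_right in Hx by lra. apply H; lra. Qed.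

Lemma L_imp (F f : R -> R) a b : a < b ->
  continuous F a -> continuous F b ->
  (forall z, a < z < b -> derivable_pt_lim F z (f z) /\ continuous f z) ->
  improper_int f a b (F b - F a).
Proof.
  intros Hab HFa HFb H. split.
  - intros c d Hc Hcd Hd. constructor. apply ex_RInt_Reals_0. apply exRInt_cont; auto.
    intros; apply H; lra.
  - intros eps Heps.
    destruct (cont_ed_inv F a HFa (eps/2)) as [d1 [Hd1 H1]]; try lra.
    destruct (cont_ed_inv F b HFb (eps/2)) as [d2 [Hd2 H2]]; try lra.
    exists (Rmin (Rmin d1 d2) ((b-a)/2)). split.
    repeat apply Rmin_pos; lra.
    intros c d pr Hc Hd.
    assert (Hm1 := Rmin_l (Rmin d1 d2) ((b-a)/2)). assert (Hm2 := Rmin_r (Rmin d1 d2) ((b-a)/2)).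
    assert (Hm3 := Rmin_l d1 d2). assert (Hm4 := Rmin_r d1 d2).
    rewrite (RI_FTC F f c d pr) by (try lra; intros; apply H; lra).
    assert (Rabs (F c - F a) < eps/2) by (apply H1; rewrite Rabs_right; lra).
    assert (Rabs (F d - F b) < eps/2) by (apply H2; rewrite Rabs_left; lra).
    replace (F d - F c - (F b - F a)) with ((F d - F b) - (F c - F a)) by ring.
    eapply Rle_lt_trans. apply Rabs_triang_minus'. lra.
Qed.

Lemma improper_unique f a b l1 l2 : a < b -> improper_int f a b l1 -> improper_int f a b l2 -> l1 = l2.
Proof.
  intros Hab [Hi H1] [_ H2]. apply Rminus_diag_uniq. apply Rabs_eq_0.
  apply Rle_antisym; [|apply Rabs_pos]. apply Rnot_lt_le. intros Hp.
  set (e := Rabs (l1 - l2)) in *.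
  destruct (H1 (e/2)) as [d1 [Hd1 K1]]; try lra.
  destruct (H2 (e/2)) as [d2 [Hd2 K2]]; try lra.
  set (d := Rmin (Rmin d1 d2) ((b-a)/2)).
  assert (Hd : 0 < d) by (unfold d; repeat apply Rmin_pos; lra).
  assert (Hm1 := Rmin_l (Rmin d1 d2) ((b-a)/2)). assert (Hm2 := Rmin_r (Rmin d1 d2) ((b-a)/2)).
  assert (Hm3 := Rmin_l d1 d2). assert (Hm4 := Rmin_r d1 d2). fold d in Hm1, Hm2.
  destruct (Hi (a + d/2) (b - d/2)) as [pr]; try lra.
  assert (A1 := K1 _ _ pr). assert (A2 := K2 _ _ pr).
  assert (Rabs (RiemannInt pr - l1) < e/2) by (apply A1; lra).
  assert (Rabs (RiemannInt pr - l2) < e/2) by (apply A2; lra).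
  assert (e <= Rabs (RiemannInt pr - l2) + Rabs (RiemannInt pr - l1)).
  { unfold e. replace (l1 - l2) with ((RiemannInt pr - l2) - (RiemannInt pr - l1)) by ring.
    apply Rabs_triang_minus'. }
  lra.
Qed.

Lemma ImpInt_val f a b l : a < b -> improper_int f a b l -> ImpInt f a b = l.
Proof. intros Hab H. unfold ImpInt.
  assert (Hs := epsilon_spec (inhabits 0) (fun l => improper_int f a b l) (ex_intro _ l H)).
  eapply improper_unique; eauto. Qed.

Lemma L_imp0 (F f : R -> R) L :
  continuous F 0 ->
  (forall eps, 0 < eps -> exists M, forall d, M < d -> Rabs (F d - L) < eps) ->
  (forall z, 0 < z -> derivable_pt_lim F z (f z) /\ continuous f z) ->
  improper_int_0inf f (L - F 0).
Proof.
  intros HF0 HL H. split.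
  - intros c d Hc Hcd. constructor. apply ex_RInt_Reals_0. apply exRInt_cont; auto.
    intros; apply H; lra.
  - intros eps Heps.
    destruct (cont_ed_inv F 0 HF0 (eps/2)) as [d1 [Hd1 H1]]; try lra.
    destruct (HL (eps/2)) as [M HM]; try lra.
    exists d1. split; auto. exists (Rmax M d1). intros c d pr Hc Hd.
    assert (Hm1 := Rmax_l M d1). assert (Hm2 := Rmax_r M d1).
    rewrite (RI_FTC F f c d pr) by (try lra; intros; apply H; lra).
    assert (Rabs (F c - F 0) < eps/2) by (apply H1; rewrite Rabs_right; lra).
    assert (Rabs (F d - L) < eps/2) by (apply HM; lra).
    replace (F d - F c - (L - F 0)) with ((F d - L) - (F c - F 0)) by ring.
    eapply Rle_lt_trans. apply Rabs_triang_minus'. lra.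
Qed.

Lemma improper0_unique f l1 l2 : improper_int_0inf f l1 -> improper_int_0inf f l2 -> l1 = l2.
Proof.
  intros [Hi H1] [_ H2]. apply Rminus_diag_uniq. apply Rabs_eq_0.
  apply Rle_antisym; [|apply Rabs_pos]. apply Rnot_lt_le. intros Hp.
  set (e := Rabs (l1 - l2)) in *.
  destruct (H1 (e/2)) as [d1 [Hd1 [M1 K1]]]; try lra.
  destruct (H2 (e/2)) as [d2 [Hd2 [M2 K2]]]; try lra.
  set (d := Rmin d1 d2).
  assert (Hd : 0 < d) by (unfold d; repeat apply Rmin_pos; lra).
  assert (Hm3 := Rmin_l d1 d2). assert (Hm4 := Rmin_r d1 d2). fold d in Hm3, Hm4.
  set (D := Rmax (Rmax M1 M2) 1 + 1).
  assert (Hx1 := Rmax_l (Rmax M1 M2) 1). assert (Hx2 := Rmax_r (Rmax M1 M2) 1).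
  assert (Hx3 := Rmax_l M1 M2). assert (Hx4 := Rmax_r M1 M2).
  assert (Hr1 := Rmin_l (d/2) (1/2)); assert (Hr2 := Rmin_r (d/2) (1/2)).
  assert (0 < Rmin (d/2) (1/2)) by (apply Rmin_pos; lra).
  destruct (Hi (Rmin (d/2) (1/2)) D) as [pr]; [lra| unfold D; lra |].
  assert (Rabs (RiemannInt pr - l1) < e/2) by (apply K1; unfold D; lra).
  assert (Rabs (RiemannInt pr - l2) < e/2) by (apply K2; unfold D; lra).
  assert (e <= Rabs (RiemannInt pr - l2) + Rabs (RiemannInt pr - l1)) by (
    unfold e; replace (l1 - l2) with ((RiemannInt pr - l2) - (RiemannInt pr - l1)) by ring;
    apply Rabs_triang_minus'). lra.
Qed.

Lemma ImpInt0_val f l : improper_int_0inf f l -> ImpInt_0inf f = l.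
Proof. intros H. unfold ImpInt_0inf.
  assert (Hs := epsilon_spec (inhabits 0) (fun l => improper_int_0inf f l) (ex_intro _ l H)).
  eapply improper0_unique; eauto. Qed.


Lemma dplus f g x lf lg : derivable_pt_lim f x lf -> derivable_pt_lim g x lg ->
  derivable_pt_lim (fun y => f y + g y) x (lf + lg).
Proof. intros. apply (derivable_pt_lim_plus f g); auto. Qed.
Lemma dminus f g x lf lg : derivable_pt_lim f x lf -> derivable_pt_lim g x lg ->
  derivable_pt_lim (fun y => f y - g y) x (lf - lg).
Proof. intros. apply (derivable_pt_lim_minus f g); auto. Qed.
Lemma dmult f g x lf lg : derivable_pt_lim f x lf -> derivable_pt_lim g x lg ->
  derivable_pt_lim (fun y => f y * g y) x (lf * g x + f x * lg).
Proof. intros. apply (derivable_pt_lim_mult f g); auto. Qed.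
Lemma dcomp f g x lf lg : derivable_pt_lim f x lf -> derivable_pt_lim g (f x) lg ->
  derivable_pt_lim (fun y => g (f y)) x (lg * lf).
Proof. intros. apply (derivable_pt_lim_comp f g); auto. Qed.
Lemma dconst c x : derivable_pt_lim (fun _ => c) x 0.
Proof. apply (derivable_pt_lim_const c). Qed.
Lemma did x : derivable_pt_lim (fun y => y) x 1.
Proof. apply derivable_pt_lim_id. Qed.
Lemma dext f g x l : (forall y, f y = g y) -> derivable_pt_lim f x l -> derivable_pt_lim g x l.
Proof. intros H1 H2. replace g with f; auto. apply functional_extensionality. auto. Qed.
Lemma dl_eq f x l l' : l = l' -> derivable_pt_lim f x l -> derivable_pt_lim f x l'.
Proof. intros ->; auto. Qed.
Lemma drpow x y : 0 < x -> derivable_pt_lim (fun z => rpow z y) x (y * rpow x (y - 1)).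
Proof. intros; apply is_derive_Reals; apply rpow_derive; auto. Qed.

Lemma exRInt_all (g : R -> R) a b : (forall z, continuous g z) -> ex_RInt g a b.
Proof. intros H. apply (ex_RInt_continuous (V:=R_CompleteNormedModule)). intros; auto. Qed.

Lemma dRInt (g : R -> R) a y : (forall z, continuous g z) ->
  derivable_pt_lim (fun b => RInt g a b) y (g y).
Proof. intros H. apply is_derive_Reals.
  apply (is_derive_RInt g (RInt g a) a y). apply locally_R. exists 1. split. lra.
  intros z _. apply (RInt_correct (V:=R_CompleteNormedModule)). apply exRInt_all; auto. auto. Qed.

Lemma RInt_ge0 (g : R -> R) a b : a <= b -> ex_RInt g a b -> (forall z, a < z < b -> 0 <= g z) -> 0 <= RInt g a b.
Proof. intros Hab He H.
  assert (H0 : RInt (fun _ => 0) a b = 0). { rewrite RInt_const. unfold scal; simpl; unfold mult; simpl; ring. }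
  rewrite <- H0. apply RInt_le; auto. apply ex_RInt_const. Qed.

Lemma mono_lim (F : R -> R) B : (forall y z, 1 <= y <= z -> F y <= F z) -> (forall y, 1 <= y -> F y <= B) ->
  exists L, (forall y, 1 <= y -> F y <= L) /\ forall eps, 0 < eps -> exists M, forall d, M < d -> Rabs (F d - L) < eps.
Proof.
  intros Hm Hb. set (E := fun r => exists y, 1 <= y /\ r = F y).
  destruct (completeness E) as [L [HL1 HL2]].
  exists B. intros r [y [Hy ->]]. auto. exists (F 1). exists 1. split; lra.
  exists L. split. intros y Hy. apply HL1. exists y; auto.
  intros eps Heps. destruct (Classical_Prop.classic (exists y, 1 <= y /\ L - eps < F y)) as [[y0 [Hy0 Hy0']]|Hn].
  - exists y0. intros d Hd. assert (F y0 <= F d) by (apply Hm; lra).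
    assert (F d <= L) by (apply HL1; exists d; split; auto; lra).
    rewrite Rabs_left1 by lra. lra.
  - exfalso. assert (L <= L - eps). apply HL2. intros r [y [Hy ->]].
    apply Rnot_lt_le. intro. apply Hn. exists y; auto. lra.
Qed.

Lemma exp_le_exp x y : x <= y -> exp x <= exp y.
Proof. intros [H|H]. left; apply exp_increasing; auto. subst; lra. Qed.

Lemma ln_le_sub1 x : 0 < x -> ln x <= x - 1.
Proof. intros H. assert (K := exp_ineq1_le (ln x)). rewrite exp_ln in K; lra. Qed.

Lemma pow_exp_bound c t : 0 < c -> 0 < t -> rpow t c * exp (- t) <= exp (c * (ln c - 1)).
Proof. intros Hc Ht. rewrite rpow_pos by auto. unfold Rpower. rewrite <- exp_plus.
  apply exp_le_exp. assert (H := ln_le_sub1 (t / c)). rewrite ln_div in H by auto.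
  assert (0 < t / c) by (apply Rdiv_lt_0_compat; auto).
  specialize (H H0). apply Rmult_le_compat_l with (r := c) in H; [|lra].
  replace (c * (t / c - 1)) with (t - c) in H by (field; lra). nra. Qed.


Lemma cexp (f : R -> R) x : continuous f x -> continuous (fun y => exp (f y)) x.
Proof. intros H. apply (ccomp f exp); auto. eapply derive_cont. apply derivable_pt_lim_exp. Qed.

Lemma dexpo x : derivable_pt_lim (fun t => exp (- t)) x (- exp (- x)).
Proof. apply (dl_eq _ _ (exp (-x) * (-1))). ring. apply (dcomp (fun t => - t) exp).
  apply (dl_eq _ _ (0 - 1)). ring. apply (dext (fun y => 0 - y)). intros; ring. apply (dminus (fun _ => 0) (fun t => t)). apply dconst. apply did.
  apply derivable_pt_lim_exp. Qed.

Lemma Chasles_R (g : R -> R) a b c : (forall z, continuous g z) -> RInt g a b + RInt g b c = RInt g a c.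
Proof. intros H. rewrite <- (RInt_Chasles g a b c). reflexivity. apply exRInt_all; auto. apply exRInt_all; auto. Qed.

Section Gam.
Variable th : R.
Hypothesis Hth : 0 < th.

Definition g1 t := rpow t th * exp (- t).
Definition F1 y := RInt g1 0 y.
Definition Kc := exp ((th + 2) * (ln (th + 2) - 1)).

Lemma g1_cont z : continuous g1 z.
Proof. unfold g1. apply cmult. apply rpow_cont; lra. apply cexp. apply copp. apply cid. Qed.

Lemma g1_ge0 z : 0 <= g1 z.
Proof. unfold g1. apply Rmult_le_pos. apply rpow_ge0. left; apply exp_pos. Qed.

Lemma g1_bound t : 0 < t -> g1 t <= Kc / (t * t).
Proof. intros Ht. unfold g1.
  assert (H := pow_exp_bound (th + 2) t ltac:(lra) Ht).
  rewrite rpow_plus in H by auto.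
  replace (rpow t 2) with (t * t) in H.
  apply Rmult_le_reg_r with (t * t). nra. replace (Kc / (t * t) * (t * t)) with Kc by (field; lra). unfold Kc. eapply Rle_trans; [|exact H]; right; ring.
  rewrite rpow_pos by auto. replace 2 with (INR 2) by (simpl; ring). rewrite Rpower_pow by auto. simpl; ring. Qed.

Lemma F1_mono y z : 0 <= y <= z -> F1 y <= F1 z.
Proof. intros H. unfold F1. rewrite <- (Chasles_R g1 0 y z) by apply g1_cont.
  assert (0 <= RInt g1 y z). apply RInt_ge0. lra. apply exRInt_all, g1_cont. intros; apply g1_ge0. lra. Qed.

Lemma F1_bound y : 1 <= y -> F1 y <= F1 1 + Kc.
Proof. intros Hy. unfold F1. rewrite <- (Chasles_R g1 0 1 y) by apply g1_cont.
  apply Rplus_le_compat_l.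
  assert (E : RInt (fun t => Kc / (t * t)) 1 y = Kc - Kc / y).
  { assert (H := is_RInt_derive (fun t => - Kc / t) (fun t => Kc / (t * t)) 1 y).
    apply is_RInt_unique in H. rewrite H. unfold minus, plus, opp; simpl. field. lra.
    intros x Hx. rewrite Rmin_left, Rmax_right in Hx by lra. auto_derive. lra. field. lra.
    intros x Hx. rewrite Rmin_left, Rmax_right in Hx by lra.
    apply (ex_derive_continuous (K:=R_AbsRing) (V:=R_NormedModule)). auto_derive. nra. }
  apply Rle_trans with (RInt (fun t => Kc / (t * t)) 1 y).
  apply RInt_le; auto. apply exRInt_all, g1_cont.
  apply (ex_RInt_continuous (V:=R_CompleteNormedModule)). intros z Hz.
  rewrite Rmin_left, Rmax_right in Hz by lra.
  apply (ex_derive_continuous (K:=R_AbsRing) (V:=R_NormedModule)). auto_derive. nra.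
  intros x Hx. apply g1_bound. lra.
  rewrite E. assert (0 < Kc / y). apply Rdiv_lt_0_compat. unfold Kc; apply exp_pos. lra. lra. Qed.

Definition L1 := proj1_sig (constructive_indefinite_description _
  (mono_lim F1 (F1 1 + Kc) (fun y z H => F1_mono y z ltac:(lra)) F1_bound)).

Lemma L1_spec : (forall y, 1 <= y -> F1 y <= L1) /\
  forall eps, 0 < eps -> exists M, forall d, M < d -> Rabs (F1 d - L1) < eps.
Proof. unfold L1. destruct constructive_indefinite_description. auto. Qed.

Lemma L1_pos : 0 < L1.
Proof. destruct L1_spec as [H _]. apply Rlt_le_trans with (F1 1); [|apply H; lra].
  unfold F1. rewrite <- (Chasles_R g1 0 (1/2) 1) by apply g1_cont.
  assert (0 <= RInt g1 0 (1/2)). apply RInt_ge0. lra. apply exRInt_all, g1_cont. intros; apply g1_ge0.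
  set (c0 := rpow (1/2) th * exp (-1)).
  assert (0 < c0). unfold c0. apply Rmult_lt_0_compat. apply rpow_gt0; lra. apply exp_pos.
  assert (RInt (fun _ => c0) (1/2) 1 <= RInt g1 (1/2) 1).
  { apply RInt_le. lra. apply ex_RInt_const. apply exRInt_all, g1_cont.
    intros x Hx. unfold g1, c0. apply Rmult_le_compat. apply rpow_ge0. left; apply exp_pos.
    apply rpow_le_base; lra. apply exp_le_exp; lra. }
  rewrite RInt_const in H2. unfold scal in H2; simpl in H2; unfold mult in H2; simpl in H2. nra. Qed.

Lemma Gamma1 : Gamma (th + 1) = L1.
Proof. unfold Gamma. replace (th + 1 - 1) with th by ring.
  replace L1 with (L1 - F1 0). apply ImpInt0_val. fold g1. apply L_imp0.
  eapply derive_cont. apply dRInt. apply g1_cont.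
  apply L1_spec. intros z Hz. split. apply dRInt. apply g1_cont. apply g1_cont.
  unfold F1. rewrite RInt_point. unfold zero; simpl; ring. Qed.

Lemma Gamma0 : Gamma th = L1 / th.
Proof. unfold Gamma.
  set (F0 := fun y => (rpow y th * exp (- y) + F1 y) / th).
  replace (L1 / th) with (L1 / th - F0 0).
  apply ImpInt0_val. apply L_imp0.
  - unfold F0. apply (continuous_ext (fun y => (rpow y th * exp (- y) + F1 y) * / th)). reflexivity.
    apply cmult; [|apply cconst]. apply cplus. apply g1_cont. eapply derive_cont. apply dRInt. apply g1_cont.
  - intros eps Heps. destruct L1_spec as [_ H]. destruct (H (th * eps / 2)) as [M HM].
    apply Rdiv_lt_0_compat; [apply Rmult_lt_0_compat|]; lra.
    assert (HK : 0 < Kc) by (unfold Kc; apply exp_pos).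
    exists (Rmax (Rmax M 1) (2 * Kc / (th * eps))). intros d Hd.
    assert (H1 := Rmax_l (Rmax M 1) (2 * Kc / (th * eps))). assert (H2 := Rmax_r (Rmax M 1) (2 * Kc / (th * eps))).
    assert (H3 := Rmax_l M 1). assert (H4 := Rmax_r M 1).
    assert (Hd1 : 1 < d) by lra.
    assert (Hb := g1_bound d ltac:(lra)). fold (g1 d).
    assert (Hg0 := g1_ge0 d).
    assert (Kc / (d * d) <= Kc / d). { unfold Rdiv. apply Rmult_le_compat_l. lra.
      apply Rinv_le_contravar; nra. }
    assert (Kc / d < th * eps / 2).
    { apply Rmult_lt_reg_r with d. lra. unfold Rdiv. rewrite Rmult_assoc, Rinv_l by lra.
      assert (H6 : 2 * Kc / (th * eps) < d) by lra. apply Rmult_lt_compat_l with (r := th * eps / 2) in H6.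
      replace (th * eps / 2 * (2 * Kc / (th * eps))) with Kc in H6 by (field; split; lra). lra.
      apply Rdiv_lt_0_compat; [apply Rmult_lt_0_compat|]; lra. }
    assert (HM' := HM d ltac:(lra)).
    unfold F0. change (rpow d th * exp (- d)) with (g1 d). replace ((g1 d + F1 d) / th - L1 / th) with ((g1 d + (F1 d - L1)) / th) by (field; lra).
    unfold Rdiv. rewrite Rabs_mult, (Rabs_right (/ th)) by (apply Rle_ge; left; apply Rinv_0_lt_compat; lra).
    apply Rmult_lt_reg_r with th. lra. rewrite Rmult_assoc, Rinv_l by lra.
    rewrite Rmult_1_r. eapply Rle_lt_trans. apply Rabs_triang. rewrite (Rabs_right (g1 d)) by lra. lra.
  - intros z Hz. split.
    + unfold F0. apply (dext (fun y => (rpow y th * exp (- y) + F1 y) * / th)). reflexivity.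
      apply (dl_eq _ _ ((th * rpow z (th - 1) * exp (- z) + rpow z th * (- exp (- z)) + g1 z) * / th + 
          (rpow z th * exp (- z) + F1 z) * 0)).
      unfold g1. field. lra.
      apply (dmult (fun y => rpow y th * exp (- y) + F1 y) (fun _ => / th)); [|apply dconst]. apply (dplus (fun y => rpow y th * exp (- y)) F1). apply (dmult (fun y => rpow y th) (fun y => exp (- y))). apply drpow; auto. apply dexpo.
      apply dRInt. apply g1_cont.
    + apply cmult. apply rpow_cont_pos; auto. apply cexp, copp, cid.
  - unfold F0, F1. rewrite RInt_point, rpow_0 by lra. unfold zero; simpl. field. lra.
Qed.

Lemma Gamma_ratio : Gamma (th + 1) * / Gamma th = th.
Proof. rewrite Gamma1, Gamma0. assert (H := L1_pos). field. lra. Qed.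

End Gam.


Definition kb th p u := rpow (1 - rpow u th) p.

Lemma kb_cont th p z : 0 < th -> 0 < p -> continuous (kb th p) z.
Proof. intros. unfold kb. apply (ccomp (fun u => 1 - rpow u th) (fun v => rpow v p)).
  apply cminus. apply cconst. apply rpow_cont; lra. apply rpow_cont; lra. Qed.

Lemma Beta_val th p : 0 < th -> 0 < p -> Beta (p + 1) (/ th) = th * RInt (kb th p) 0 1.
Proof. intros Hth Hp. unfold Beta. replace (p + 1 - 1) with p by ring.
  set (w := fun y => rpow (1 - y) (/ th)).
  set (F := fun y => - th * RInt (kb th p) 1 (w y)).
  assert (Hw0 : w 0 = 1). { unfold w. rewrite Rminus_0_r. apply rpow_1base. }
  assert (Hw1 : w 1 = 0). { unfold w. rewrite Rminus_diag. apply rpow_0. apply Rinv_neq_0_compat; lra. }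
  assert (E : th * RInt (kb th p) 0 1 = F 1 - F 0).
  { unfold F. rewrite Hw0, Hw1, RInt_point. rewrite <- (opp_RInt_swap (kb th p) 0 1).
    unfold opp, zero; simpl. ring. apply exRInt_all. intros; apply kb_cont; auto. }
  rewrite E. apply ImpInt_val. lra.
  assert (Hwc : forall z, continuous w z).
  { intros z. unfold w. apply (ccomp (fun y => 1 - y) (fun v => rpow v (/ th))).
    apply cminus. apply cconst. apply cid. apply rpow_cont. left; apply Rinv_0_lt_compat; auto. }
  assert (HFc : forall z, continuous F z).
  { intros z. unfold F. apply cmult. apply cconst.
    apply (ccomp w (fun v => RInt (kb th p) 1 v)). auto. eapply derive_cont. apply dRInt.
    intros; apply kb_cont; auto. }
  apply L_imp. lra. auto. auto.
  intros z Hz. split.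
  - unfold F. apply (dl_eq _ _ (0 * RInt (kb th p) 1 (w z) + - th * (kb th p (w z) * ((/ th * rpow (1 - z) (/ th - 1)) * (0 - 1))))).
    unfold kb, w. rewrite rpow_rpow by (try lra; apply Rinv_neq_0_compat; lra).
    rewrite Rinv_l, rpow_1 by lra. replace (1 - (1 - z)) with z by ring. field. lra.
    apply (dmult (fun _ => - th) (fun y => RInt (kb th p) 1 (w y))). apply dconst.
    apply (dcomp w (fun v => RInt (kb th p) 1 v)).
    unfold w. apply (dcomp (fun y => 1 - y) (fun v => rpow v (/ th))).
    apply (dminus (fun _ => 1) (fun y => y)). apply dconst. apply did. apply drpow. lra.
    apply dRInt. intros; apply kb_cont; auto.
  - apply cmult. apply rpow_cont_pos; lra.
    apply (ccomp (fun y => 1 - y) (fun v => rpow v (/ th - 1))).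
    apply cminus. apply cconst. apply cid. apply rpow_cont_pos; lra.
Qed.


Lemma rpow_inv x e : 0 < x -> rpow (/ x) e = / rpow x e.
Proof. intros H. rewrite !rpow_pos by (auto; apply Rinv_0_lt_compat; auto).
  unfold Rpower. rewrite ln_Rinv by auto. rewrite <- exp_Ropp. f_equal. ring. Qed.

Lemma amgm x y p q : 0 <= x -> 0 <= y -> 0 < p -> 0 < q -> / p + / q = 1 ->
  rpow x (/ p) * rpow y (/ q) <= x / p + y / q.
Proof. intros Hx Hy Hp Hq Hpq.
  assert (Hip : 0 < / p) by (apply Rinv_0_lt_compat; auto).
  assert (Hiq : 0 < / q) by (apply Rinv_0_lt_compat; auto).
  destruct (Rle_lt_or_eq_dec 0 x Hx) as [Hx'|<-].
  2: { rewrite rpow_0 by lra. rewrite Rmult_0_l. unfold Rdiv. 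
       apply Rplus_le_le_0_compat; apply Rmult_le_pos; lra. }
  destruct (Rle_lt_or_eq_dec 0 y Hy) as [Hy'|<-].
  2: { rewrite (rpow_0 (/ q)) by lra. rewrite Rmult_0_r. unfold Rdiv.
       apply Rplus_le_le_0_compat; apply Rmult_le_pos; lra. }
  set (A := x / p + y / q).
  assert (HA : 0 < A). { unfold A, Rdiv. apply Rplus_lt_0_compat; apply Rmult_lt_0_compat; lra. }
  rewrite !rpow_pos by auto. unfold Rpower. rewrite <- exp_plus.
  rewrite <- (exp_ln A) by auto. apply exp_le_exp.
  assert (H1 := ln_le_sub1 (x / A) ltac:(apply Rdiv_lt_0_compat; auto)).
  assert (H2 := ln_le_sub1 (y / A) ltac:(apply Rdiv_lt_0_compat; auto)).
  rewrite ln_div in H1, H2 by auto.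
  assert (/ p * (ln x - ln A) + / q * (ln y - ln A) <= / p * (x / A - 1) + / q * (y / A - 1)).
  { apply Rplus_le_compat; apply Rmult_le_compat_l; lra. }
  replace (/ p * (x / A - 1) + / q * (y / A - 1)) with ((x / p + y / q) / A - (/ p + / q)) in H by (field; lra).
  fold A in H. rewrite Hpq in H. unfold Rdiv in H. rewrite Rinv_r in H by lra.
  replace (/ p * ln x + / q * ln y) with (/ p * (ln x - ln A) + / q * (ln y - ln A) + (/p + /q) * ln A) by ring.
  rewrite Hpq. lra.
Qed.

Lemma RInt_lin (f g : R -> R) a b c d : ex_RInt f a b -> ex_RInt g a b ->
  RInt (fun u => c * f u + d * g u) a b = c * RInt f a b + d * RInt g a b.
Proof. intros Hf Hg.
  apply (is_RInt_unique (V:=R_CompleteNormedModule)).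
  apply (is_RInt_ext (V:=R_CompleteNormedModule) (fun u => plus (scal c (f u)) (scal d (g u)))).
  intros; reflexivity.
  apply (is_RInt_plus (V:=R_CompleteNormedModule)); apply (is_RInt_scal (V:=R_CompleteNormedModule)); apply (RInt_correct (V:=R_CompleteNormedModule)); auto.
Qed.

Lemma holder (F G : R -> R) p q : 1 < q -> p = q / (q - 1) ->
  (forall z, continuous F z) -> (forall z, continuous G z) ->
  (forall u, 0 <= u <= 1 -> 0 <= F u /\ 0 <= G u) ->
  0 < RInt (fun u => rpow (F u) p) 0 1 -> 0 < RInt (fun u => rpow (G u) q) 0 1 ->
  RInt (fun u => F u * G u) 0 1 <=
    rpow (RInt (fun u => rpow (F u) p) 0 1) (/ p) * rpow (RInt (fun u => rpow (G u) q) 0 1) (/ q).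
Proof.
  intros Hq Hp HF HG Hpos HX HY.
  set (X := RInt (fun u => rpow (F u) p) 0 1) in *.
  set (Y := RInt (fun u => rpow (G u) q) 0 1) in *.
  assert (Hp1 : 1 < p). { rewrite Hp. apply Rmult_lt_reg_r with (q - 1). lra.
    unfold Rdiv. rewrite Rmult_assoc, Rinv_l by lra. lra. }
  assert (Hpq : / p + / q = 1). { rewrite Hp. field. lra. }
  set (cX := rpow X (/ p)). set (cY := rpow Y (/ q)).
  assert (HcX : 0 < cX) by (apply rpow_gt0; auto). assert (HcY : 0 < cY) by (apply rpow_gt0; auto).
  assert (Hc : forall z, continuous (fun u => rpow (F u) p) z).
  { intros z. apply (ccomp F (fun v => rpow v p)). auto. apply rpow_cont; lra. }
  assert (Hc' : forall z, continuous (fun u => rpow (G u) q) z).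
  { intros z. apply (ccomp G (fun v => rpow v q)). auto. apply rpow_cont; lra. }
  apply Rle_trans with (RInt (fun u => (cX * cY / (p * X)) * rpow (F u) p + (cX * cY / (q * Y)) * rpow (G u) q) 0 1).
  - apply RInt_le. lra. apply exRInt_all. intros; apply cmult; auto.
    apply exRInt_all. intros; apply cplus; apply cmult; auto; apply cconst.
    intros u Hu. destruct (Hpos u ltac:(lra)) as [HFu HGu].
    assert (H := amgm (rpow (F u) p * / X) (rpow (G u) q * / Y) p q).
    rewrite !rpow_mult_distr in H; try (try apply rpow_ge0; left; apply Rinv_0_lt_compat; auto).
    rewrite !rpow_inv_pow, !rpow_inv in H by (auto; lra). fold cX cY in H.
    specialize (H ltac:(apply Rmult_le_pos; [apply rpow_ge0|left; apply Rinv_0_lt_compat; auto])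
                   ltac:(apply Rmult_le_pos; [apply rpow_ge0|left; apply Rinv_0_lt_compat; auto]) ltac:(lra) ltac:(lra) Hpq).
    apply Rmult_le_compat_l with (r := cX * cY) in H; [|nra].
    replace (cX * cY * (F u * / cX * (G u * / cY))) with (F u * G u) in H by (field; lra).
    eapply Rle_trans. exact H. right. field. lra.
  - rewrite RInt_lin by (apply exRInt_all; auto). fold X Y.
    right. replace (cX * cY) with (cX * cY * (/ p + / q)) at 3 by (rewrite Hpq; ring). field. lra.
Qed.


Lemma dlip (phi : R -> R) x l : derivable_pt_lim phi x l ->
  exists d, 0 < d /\ forall y, Rabs (y - x) < d -> Rabs (phi y - phi x) <= (Rabs l + 1) * Rabs (y - x).
Proof. intros H. destruct (H 1 ltac:(lra)) as [d Hd]. exists d. split. apply cond_pos.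
  intros y Hy. destruct (Req_dec y x) as [->|Hne].
  rewrite !Rminus_diag, Rabs_R0. lra.
  specialize (Hd (y - x) ltac:(lra) Hy). replace (x + (y - x)) with y in Hd by ring.
  assert (Hyx : 0 < Rabs (y - x)) by (apply Rabs_pos_lt; lra).
  replace (phi y - phi x) with (((phi y - phi x) / (y - x) - l) * (y - x) + l * (y - x)) by (field; lra).
  eapply Rle_trans. apply Rabs_triang. rewrite !Rabs_mult. nra. Qed.

Lemma kcont th (k : R -> R) : 0 < th -> k 0 = 0 -> continuous k 0 ->
  (exists C d, 0 < d /\ forall u, Rabs u < d -> Rabs (k u) <= C * Rabs u) ->
  continuous (fun u => rpow u (th - 1) * k u) 0.
Proof.
  intros Hth Hk0 Hkc [C [d [Hd HC]]]. apply cont_ed. intros eps Heps.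
  rewrite Hk0, Rmult_0_r.
  set (C' := Rabs C + 1). assert (HC' : 0 < C') by (unfold C'; assert (H := Rabs_pos C); lra).
  assert (HC2 : forall u, Rabs u < d -> Rabs (k u) <= C' * Rabs u).
  { intros u Hu. eapply Rle_trans. apply HC; auto. apply Rmult_le_compat_r. apply Rabs_pos.
    unfold C'. assert (H := Rle_abs C). lra. }
  destruct (cont_ed_inv k 0 Hkc eps Heps) as [d2 [Hd2 H2]].
  set (e1 := rpow (eps / C') (/ th)).
  assert (He1 : 0 < e1). { apply rpow_gt0. apply Rdiv_lt_0_compat; auto. }
  exists (Rmin (Rmin d d2) (Rmin e1 (eps / C'))). split.
  repeat apply Rmin_pos; auto. apply Rdiv_lt_0_compat; auto.
  intros u Hu. rewrite Rminus_0_r in Hu |- *.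
  assert (Hm1 := Rmin_l (Rmin d d2) (Rmin e1 (eps / C'))). assert (Hm2 := Rmin_r (Rmin d d2) (Rmin e1 (eps / C'))).
  assert (Hm3 := Rmin_l d d2). assert (Hm4 := Rmin_r d d2).
  assert (Hm5 := Rmin_l e1 (eps / C')). assert (Hm6 := Rmin_r e1 (eps / C')).
  destruct (Rle_lt_dec u 0) as [Hu0|Hu0].
  - destruct (Req_dec th 1) as [->|Hne].
    + replace (1 - 1) with 0 by ring. rewrite rpow_y0, Rmult_1_l.
      specialize (H2 u ltac:(rewrite Rminus_0_r; lra)). rewrite Hk0, Rminus_0_r in H2. auto.
    + rewrite rpow_nonpos by lra. rewrite Rmult_0_l, Rabs_R0. auto.
  - rewrite Rabs_right in Hu by lra.
    assert (Hud : Rabs u < d) by (rewrite Rabs_right; lra). specialize (HC2 u Hud). rewrite (Rabs_right u) in HC2 by lra.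
    rewrite Rabs_mult, (Rabs_right (rpow u (th - 1))) by (apply Rle_ge, rpow_ge0).
    eapply Rle_lt_trans. apply Rmult_le_compat_l. apply rpow_ge0. exact HC2.
    replace (rpow u (th - 1) * (C' * u)) with (C' * rpow u th).
    2: { replace th with ((th - 1) + 1) at 1 by ring. rewrite rpow_plus, rpow_1 by lra. ring. }
    assert (rpow u th < rpow e1 th) by (apply rpow_lt_base; lra).
    unfold e1 in H. rewrite rpow_rpow in H by (try (apply Rinv_neq_0_compat; lra); left; apply Rdiv_lt_0_compat; auto).
    rewrite Rinv_l, rpow_1 in H by (try lra; left; apply Rdiv_lt_0_compat; auto).
    apply Rmult_lt_compat_l with (r := C') in H; auto.
    replace (C' * (eps / C')) with eps in H by (field; lra). auto.
Qed.

Section Core.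
Variables th alpha m P Q q p c : R.
Hypothesis Hth : 0 < th.
Hypothesis Hal : 0 <= alpha <= 1.
Hypothesis Hm : 0 < m <= 1.
Hypothesis HP : 0 <= P.
Hypothesis HQ : 0 <= Q.
Hypothesis Hq : 1 < q.
Hypothesis Hp : p = q / (q - 1).
Hypothesis Hc : 0 <= c.

Definition inner u := rpow u alpha * P + m * (1 - rpow u alpha) * Q.
Definition hh u := rpow (inner u) (/ q).
Definition HH u := RInt hh 0 u.

Lemma Hp1 : 1 < p.
Proof. rewrite Hp. apply Rmult_lt_reg_r with (q - 1). lra.
  unfold Rdiv. rewrite Rmult_assoc, Rinv_l by lra. lra. Qed.

Lemma inner_cont z : continuous inner z.
Proof. unfold inner. apply cplus. apply cmult. apply rpow_cont; lra. apply cconst.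
  apply cmult; [|apply cconst]. apply cmult. apply cconst. apply cminus. apply cconst. apply rpow_cont; lra. Qed.

Lemma hh_cont z : continuous hh z.
Proof. unfold hh. apply (ccomp inner (fun v => rpow v (/ q))). apply inner_cont.
  apply rpow_cont. left; apply Rinv_0_lt_compat; lra. Qed.

Lemma inner_ge0 u : 0 <= u <= 1 -> 0 <= inner u.
Proof. intros Hu. unfold inner. assert (H1 := rpow_ge0 u alpha). assert (H2 := rpow_le1 u alpha ltac:(lra) Hu).
  apply Rplus_le_le_0_compat. apply Rmult_le_pos; lra. apply Rmult_le_pos; [apply Rmult_le_pos|]; lra. Qed.

Lemma hh_ge0 u : 0 <= hh u.
Proof. apply rpow_ge0. Qed.

Lemma HH_deriv u : derivable_pt_lim HH u (hh u).
Proof. apply dRInt. apply hh_cont. Qed.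

Lemma HH_bound : exists M, 0 <= M /\ forall u, Rabs u < 1 -> Rabs (HH u) <= M * Rabs u.
Proof. destruct (cont_bound hh (-1) 1) as [M [HM0 HM]]. lra. intros; apply hh_cont.
  exists M. split; auto. intros u Hu. apply Rabs_def2 in Hu. unfold HH.
  destruct (Rle_lt_dec 0 u).
  - rewrite (Rabs_right u) by lra. rewrite Rmult_comm. replace u with (u - 0) at 2 by ring.
    apply abs_RInt_le_const. lra. apply exRInt_all, hh_cont. intros; apply HM; lra.
  - rewrite (Rabs_left u) by lra. rewrite <- (opp_RInt_swap hh u 0) by (apply exRInt_all, hh_cont).
    unfold opp; simpl. rewrite Rabs_Ropp. rewrite Rmult_comm. replace (- u) with (0 - u) by ring.
    apply abs_RInt_le_const. lra. apply exRInt_all, hh_cont. intros; apply HM; lra. Qed.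

Lemma int_inner : RInt inner 0 1 = (P + alpha * m * Q) / (alpha + 1).
Proof.
  set (Psi := fun u => rpow u (alpha + 1) / (alpha + 1) * P + m * Q * (u - rpow u (alpha + 1) / (alpha + 1))).
  assert (E : Psi 1 - Psi 0 = (P + alpha * m * Q) / (alpha + 1)).
  { unfold Psi. rewrite rpow_1base, rpow_0 by lra. field. lra. }
  rewrite <- E. apply (FTC_open Psi inner 0 1).
  lra. intros; apply inner_cont.
  unfold Psi. apply cplus. apply cmult; [|apply cconst]. apply cmult; [|apply cconst]. apply rpow_cont; lra.
  apply cmult. apply cconst. apply cminus. apply cid. apply cmult; [|apply cconst]. apply rpow_cont; lra.
  unfold Psi. apply cplus. apply cmult; [|apply cconst]. apply cmult; [|apply cconst]. apply rpow_cont; lra.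
  apply cmult. apply cconst. apply cminus. apply cid. apply cmult; [|apply cconst]. apply rpow_cont; lra.
  intros z Hz. unfold Psi.
  apply (dl_eq _ _ (((alpha + 1) * rpow z (alpha + 1 - 1) * / (alpha + 1) + rpow z (alpha + 1) * 0) * P + rpow z (alpha + 1) / (alpha + 1) * 0
     + (0 * (z - rpow z (alpha + 1) / (alpha + 1)) + m * Q * (1 - ((alpha + 1) * rpow z (alpha + 1 - 1) * / (alpha + 1) + rpow z (alpha + 1) * 0))))).
  unfold inner. replace (alpha + 1 - 1) with alpha by ring. field. lra.
  apply (dplus (fun y => rpow y (alpha + 1) / (alpha + 1) * P) (fun y => m * Q * (y - rpow y (alpha + 1) / (alpha + 1)))).
  apply (dmult (fun y => rpow y (alpha + 1) / (alpha + 1)) (fun _ => P)); [|apply dconst].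
  apply (dmult (fun y => rpow y (alpha + 1)) (fun _ => / (alpha + 1))); [|apply dconst]. apply drpow; lra.
  apply (dmult (fun _ => m * Q) (fun y => y - rpow y (alpha + 1) / (alpha + 1))). apply dconst.
  apply (dminus (fun y => y) (fun y => rpow y (alpha + 1) / (alpha + 1))). apply did.
  apply (dmult (fun y => rpow y (alpha + 1)) (fun _ => / (alpha + 1))); [|apply dconst]. apply drpow; lra.
Qed.


Lemma cont_of_d (f : R -> R) x l : derivable_pt_lim f x l -> continuity_pt f x.
Proof. intros H. apply continuity_pt_filterlim. eapply derive_cont. exact H. Qed.

Lemma cpt (f : R -> R) x : continuous f x -> continuity_pt f x.
Proof. intros H. apply continuity_pt_filterlim. exact H. Qed.

Lemma kb_pos : 0 < RInt (kb th p) 0 1.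
Proof.
  assert (Hp1' := Hp1).
  assert (Hkc : forall z, continuous (kb th p) z) by (intros; apply kb_cont; lra).
  rewrite <- (Chasles_R (kb th p) 0 (1/2) 1) by auto.
  assert (0 <= RInt (kb th p) (1/2) 1). apply RInt_ge0. lra. apply exRInt_all; auto.
  intros; apply rpow_ge0.
  set (c0 := rpow (1 - rpow (1/2) th) p).
  assert (Hh : rpow (1/2) th < 1). { assert (H9 := rpow_lt_base (1/2) 1 th ltac:(lra) ltac:(lra)). rewrite rpow_1base in H9. exact H9. }
  assert (0 < c0) by (apply rpow_gt0; lra).
  assert (RInt (fun _ => c0) 0 (1/2) <= RInt (kb th p) 0 (1/2)).
  { apply RInt_le. lra. apply ex_RInt_const. apply exRInt_all; auto.
    intros x Hx. unfold kb, c0. apply rpow_le_base. lra. split.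
    assert (rpow (1/2) th >= 0) by (apply Rle_ge, rpow_ge0). lra.
    assert (rpow x th <= rpow (1/2) th) by (apply rpow_le_base; lra). lra. }
  rewrite RInt_const in H1. unfold scal in H1; simpl in H1; unfold mult in H1; simpl in H1. nra.
Qed.

Lemma core (phi dphi : R -> R) :
  (forall u, 0 <= u <= 1 -> derivable_pt_lim phi u (dphi u)) ->
  (forall u, 0 <= u <= 1 -> Rabs (dphi u) <= c * hh u) ->
  Rabs (th * RInt (fun u => rpow u (th - 1) * (phi u - phi 0)) 0 1)
   <= c * (rpow (RInt (kb th p) 0 1) (/ p) * rpow ((P + alpha * m * Q) / (alpha + 1)) (/ q)).
Proof.
  intros Hd Hb.
  assert (HHc : forall z, continuous HH z) by (intros; eapply derive_cont; apply HH_deriv).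
  assert (HH0 : HH 0 = 0) by (unfold HH; rewrite RInt_point; reflexivity).
  assert (Ha : forall u, 0 <= u <= 1 -> Rabs (phi u - phi 0) <= c * HH u).
  { intros u Hu. destruct (Req_dec u 0) as [->|Hu0].
    rewrite Rminus_diag, Rabs_R0, HH0. lra.
    assert (M1 := MVT_gen (fun v => c * HH v - (phi v - phi 0)) 0 u (fun v => c * hh v - dphi v)).
    assert (M2 := MVT_gen (fun v => c * HH v + (phi v - phi 0)) 0 u (fun v => c * hh v + dphi v)).
    cbv zeta in M1, M2. rewrite Rmin_left, Rmax_right in M1, M2 by lra.
    destruct M1 as [x1 [Hx1 E1]].
    { intros x Hx. apply is_derive_Reals.
      apply (dminus (fun v => c * HH v) (fun v => phi v - phi 0)).
      apply (dl_eq _ _ (0 * HH x + c * hh x)). ring. apply (dmult (fun _ => c) HH). apply dconst. apply HH_deriv.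
      apply (dl_eq _ _ (dphi x - 0)). ring. apply (dminus phi (fun _ => phi 0)). apply Hd; lra. apply dconst. }
    { intros x Hx. apply cpt. apply cminus. apply cmult. apply cconst. auto.
      apply cminus. eapply derive_cont. apply Hd. lra. apply cconst. }
    destruct M2 as [x2 [Hx2 E2]].
    { intros x Hx. apply is_derive_Reals.
      apply (dplus (fun v => c * HH v) (fun v => phi v - phi 0)).
      apply (dl_eq _ _ (0 * HH x + c * hh x)). ring. apply (dmult (fun _ => c) HH). apply dconst. apply HH_deriv.
      apply (dl_eq _ _ (dphi x - 0)). ring. apply (dminus phi (fun _ => phi 0)). apply Hd; lra. apply dconst. }
    { intros x Hx. apply cpt. apply cplus. apply cmult. apply cconst. auto.
      apply cminus. eapply derive_cont. apply Hd. lra. apply cconst. }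
    rewrite HH0, Rminus_diag in E1, E2.
    assert (B1 := Hb x1 ltac:(lra)). assert (B2 := Hb x2 ltac:(lra)).
    apply Rabs_le_between in B1. apply Rabs_le_between in B2.
    assert (0 <= (c * hh x1 - dphi x1) * (u - 0)) by (apply Rmult_le_pos; lra).
    assert (0 <= (c * hh x2 + dphi x2) * (u - 0)) by (apply Rmult_le_pos; lra).
    apply Rabs_le. lra. }
  set (kf := fun u => rpow u (th - 1) * (phi u - phi 0)).
  assert (Hkf : forall z, 0 <= z <= 1 -> continuous kf z).
  { intros z Hz. destruct (Req_dec z 0) as [->|Hz0].
    - unfold kf. apply (kcont th (fun u => phi u - phi 0)). auto. ring.
      apply cminus. eapply derive_cont. apply Hd; lra. apply cconst.
      destruct (dlip phi 0 (dphi 0) (Hd 0 ltac:(lra))) as [d [Hd0 Hl]].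
      exists (Rabs (dphi 0) + 1), d. split; auto. intros u Hu. rewrite <- (Rminus_0_r u) at 2. apply Hl.
      rewrite Rminus_0_r; auto.
    - unfold kf. apply cmult. apply rpow_cont_pos. lra. apply cminus. eapply derive_cont. apply Hd; lra.
      apply cconst. }
  set (jH := fun u => rpow u (th - 1) * HH u).
  assert (HjH : forall z, continuous jH z).
  { intros z. destruct (Req_dec z 0) as [->|Hz0].
    - unfold jH. apply kcont; auto. destruct HH_bound as [M [HM0 HM]]. exists M, 1. split. lra. auto.
    - unfold jH. apply cmult. apply rpow_cont_ne0; auto. auto. }
  assert (Hd1 : Rabs (th * RInt kf 0 1) <= c * (th * RInt jH 0 1)).
  { rewrite Rabs_mult, Rabs_right by lra.
    replace (c * (th * RInt jH 0 1)) with (th * RInt (fun u => c * jH u) 0 1).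
    apply Rmult_le_compat_l. lra. eapply Rle_trans. apply abs_RInt_le. lra.
    apply exRInt_cont. lra. auto.
    apply RInt_le. lra. apply exRInt_cont. lra. intros; apply cabs; auto.
    apply exRInt_all. intros; apply cmult; auto; apply cconst.
    intros x Hx. unfold kf, jH. rewrite Rabs_mult, (Rabs_right (rpow x (th - 1))) by (apply Rle_ge, rpow_ge0).
    assert (H := Ha x ltac:(lra)). assert (H' := rpow_ge0 x (th - 1)). nra.
    assert (E : RInt (fun u => c * jH u) 0 1 = c * RInt jH 0 1).
    { apply (RInt_scal (V:=R_CompleteNormedModule)); apply exRInt_all; auto. }
    rewrite E. ring. }
  set (Fh := fun u => (1 - rpow u th) * hh u).
  assert (HFh : forall z, continuous Fh z).
  { intros z. unfold Fh. apply cmult. apply cminus. apply cconst. apply rpow_cont; lra. apply hh_cont. }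
  assert (He : th * RInt jH 0 1 = RInt Fh 0 1).
  { set (Phi := fun u => (rpow u th - 1) * HH u).
    assert (E0 : RInt (fun u => th * jH u + (-1) * Fh u) 0 1 = Phi 1 - Phi 0).
    { apply FTC_open. lra. intros; apply cplus; apply cmult; auto; apply cconst.
      unfold Phi; apply cmult; auto; apply cminus; [apply rpow_cont; lra|apply cconst].
      unfold Phi; apply cmult; auto; apply cminus; [apply rpow_cont; lra|apply cconst].
      intros z Hz. unfold Phi.
      apply (dl_eq _ _ ((th * rpow z (th - 1) - 0) * HH z + (rpow z th - 1) * hh z)).
      unfold jH, Fh. ring.
      apply (dmult (fun u => rpow u th - 1) HH). apply (dminus (fun u => rpow u th) (fun _ => 1)).
      apply drpow; lra. apply dconst. apply HH_deriv. }
    rewrite RInt_lin in E0. unfold Phi in E0. rewrite rpow_1base, rpow_0, HH0 in E0 by lra. lra.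
    apply exRInt_all; auto. apply exRInt_all; auto. }
  assert (Hf : RInt Fh 0 1 <= rpow (RInt (kb th p) 0 1) (/ p) * rpow ((P + alpha * m * Q) / (alpha + 1)) (/ q)).
  { assert (HZ0 : 0 <= (P + alpha * m * Q) / (alpha + 1)).
    { apply Rdiv_le_0_compat; [|lra]. assert (0 <= alpha * m * Q) by (apply Rmult_le_pos; [apply Rmult_le_pos|]; lra). lra. }
    destruct (Rle_lt_or_eq_dec _ _ HZ0) as [HZ|HZ].
    - assert (Hp1' := Hp1).
      assert (HY : RInt (fun u => rpow (hh u) q) 0 1 = (P + alpha * m * Q) / (alpha + 1)).
      { rewrite <- int_inner. apply RInt_ext. intros x Hx. rewrite Rmin_left, Rmax_right in Hx by lra.
        unfold hh. rewrite rpow_rpow, Rinv_l, rpow_1; try reflexivity; try lra; try (apply inner_ge0; lra);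
        try (apply Rinv_neq_0_compat; lra). }
      assert (H := holder (fun u => 1 - rpow u th) hh p q Hq Hp).
      rewrite HY in H. apply H.
      intros; apply cminus; [apply cconst|apply rpow_cont; lra]. apply hh_cont.
      intros u Hu. split. assert (rpow u th <= 1) by (apply rpow_le1; lra). lra. apply hh_ge0.
      apply kb_pos. exact HZ.
    - assert (E : RInt Fh 0 1 = 0).
      { rewrite <- (RInt_ext (fun _ => 0)). rewrite RInt_const. unfold scal; simpl; unfold mult; simpl. ring.
        intros x Hx. rewrite Rmin_left, Rmax_right in Hx by lra. unfold Fh, hh.
        assert (Hi : inner x = 0).
        { assert (HPZ : P + alpha * m * Q = 0).
          { apply (Rmult_eq_reg_r (/ (alpha + 1))). rewrite Rmult_0_l. symmetry. exact HZ.
            apply Rinv_neq_0_compat; lra. }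
          assert (0 <= alpha * m * Q) by (apply Rmult_le_pos; [apply Rmult_le_pos|]; lra).
          assert (HP0 : P = 0) by lra. unfold inner. rewrite HP0.
          destruct (Req_dec alpha 0) as [->|Ha0]. rewrite rpow_y0. ring.
          assert (HQ0 : Q = 0). { assert (alpha * m * Q = 0) by lra. apply Rmult_integral in H0.
            destruct H0 as [H0|H0]; auto. apply Rmult_integral in H0. lra. }
          rewrite HQ0. ring. }
        rewrite Hi, rpow_0, Rmult_0_r. reflexivity. apply Rinv_neq_0_compat; lra. }
      rewrite E. apply Rmult_le_pos; apply rpow_ge0. }
  fold kf. eapply Rle_trans. exact Hd1. rewrite He. apply Rmult_le_compat_l; auto.
Qed.

End Core.


Lemma dRInt_loc (g : R -> R) l r a y : l < a < r -> l < y < r -> (forall z, l < z < r -> continuous g z) ->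
  derivable_pt_lim (fun b => RInt g a b) y (g y).
Proof. intros Ha Hy H. apply is_derive_Reals.
  apply (is_derive_RInt g (RInt g a) a y).
  apply locally_R. exists (Rmin (y - l) (r - y)). split. apply Rmin_pos; lra.
  intros z Hz. apply (RInt_correct (V:=R_CompleteNormedModule)).
  assert (Hm1 := Rmin_l (y - l) (r - y)). assert (Hm2 := Rmin_r (y - l) (r - y)).
  apply Rabs_def2 in Hz.
  apply (ex_RInt_continuous (V:=R_CompleteNormedModule)). intros w Hw.
  assert (Rmin a z <= w <= Rmax a z) by auto.
  apply H. split.
  eapply Rlt_le_trans; [|apply H0]. apply Rmin_glb_lt; lra.
  eapply Rle_lt_trans; [apply H0|]. apply Rmax_lub_lt; lra.
  apply H; lra. Qed.

Lemma rpow_div x y e : 0 < x -> 0 < y -> rpow (x / y) e = rpow x e / rpow y e.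
Proof. intros. unfold Rdiv. rewrite rpow_mult_distr by (try lra; left; apply Rinv_0_lt_compat; lra).
  rewrite rpow_inv by lra. reflexivity. Qed.

Lemma rpow_pred x th : 0 < x -> rpow x th = rpow x (th - 1) * x.
Proof. intros. replace th with ((th - 1) + 1) at 1 by ring. rewrite rpow_plus, rpow_1 by lra. ring. Qed.

Section JEval.
Variables (f f' : R -> R) (th A X dl : R).
Hypothesis Hth : 0 < th.
Hypothesis HAX : A < X.
Hypothesis Hdl : 0 < dl.
Hypothesis Hf : forall s, A - dl < s < X + dl -> derivable_pt_lim f s (f' s).

Lemma f_cont s : A - dl < s < X + dl -> continuous f s.
Proof. intros. eapply derive_cont. apply Hf; auto. Qed.

Definition DL := X - A.
Definition kL u := rpow u (th - 1) * (f (A + u * DL) - f A).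

Lemma DL_pos : 0 < DL. Proof. unfold DL; lra. Qed.

Lemma kL_cont z : - dl / DL < z < 1 + dl / DL -> continuous kL z.
Proof. intros Hz. assert (HD := DL_pos).
  assert (Hr : A - dl < A + z * DL < X + dl).
  { assert (Hz1 : - dl < z * DL). { replace (- dl) with (- dl / DL * DL) by (field; lra). apply Rmult_lt_compat_r; lra. }
    assert (Hz2 : z * DL < DL + dl). { replace (DL + dl) with ((1 + dl / DL) * DL) by (field; lra). apply Rmult_lt_compat_r; lra. }
    unfold DL in *; lra. }
  assert (Hc : continuous (fun u => f (A + u * DL) - f A) z).
  { apply cminus; [|apply cconst]. apply (ccomp (fun u => A + u * DL) f).
    apply cplus. apply cconst. apply cmult. apply cid. apply cconst. apply f_cont; auto. }
  destruct (Req_dec z 0) as [->|Hz0].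
  - unfold kL. apply kcont; auto. rewrite Rmult_0_l, Rplus_0_r. ring.
    destruct (dlip f A (f' A) (Hf A ltac:(lra))) as [d [Hd0 Hl]].
    exists ((Rabs (f' A) + 1) * DL), (d / DL). split. apply Rdiv_lt_0_compat; auto.
    intros u Hu. eapply Rle_trans. apply Hl. replace (A + u * DL - A) with (u * DL) by ring.
    rewrite Rabs_mult, (Rabs_right DL) by lra.
    apply Rmult_lt_compat_r with (r := DL) in Hu; auto. replace (d / DL * DL) with d in Hu by (field; lra). lra.
    right. replace (A + u * DL - A) with (u * DL) by ring. rewrite Rabs_mult, (Rabs_right DL) by lra. ring.
  - unfold kL. apply cmult; auto. apply rpow_cont_ne0; auto.
Qed.

Lemma Jleft_eval : th * ImpInt (fun s => rpow (s - A) (th - 1) * f s) A X =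
  rpow DL th * f A + th * rpow DL th * RInt kL 0 1.
Proof.
  assert (HD := DL_pos).
  assert (Hdd : 0 < dl / DL) by (apply Rdiv_lt_0_compat; auto).
  set (F := fun y => rpow (y - A) th * f A / th + rpow DL th * RInt kL 0 ((y - A) / DL)).
  assert (HdF : forall y, A - dl < y < X + dl -> derivable_pt_lim (fun y => RInt kL 0 ((y - A) / DL)) y (kL ((y - A) / DL) * / DL)).
  { intros y Hy. apply (dcomp (fun y => (y - A) / DL) (fun v => RInt kL 0 v)).
    apply (dl_eq _ _ ((1 - 0) * / DL + (y - A) * 0)). ring.
    apply (dmult (fun y => y - A) (fun _ => / DL)). apply (dminus (fun y => y) (fun _ => A)). apply did. apply dconst. apply dconst.
    apply (dRInt_loc kL (- dl / DL) (1 + dl / DL)).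
    split. unfold Rdiv. rewrite Ropp_mult_distr_l_reverse. apply Ropp_lt_gt_0_contravar in Hdd. unfold Rdiv in Hdd. lra. lra.
    split. apply Rmult_lt_reg_r with DL; auto. replace (- dl / DL * DL) with (- dl) by (field; lra).
    replace ((y - A) / DL * DL) with (y - A) by (field; lra). lra.
    apply Rmult_lt_reg_r with DL; auto. replace ((1 + dl / DL) * DL) with (DL + dl) by (field; lra).
    replace ((y - A) / DL * DL) with (y - A) by (field; lra). unfold DL; lra.
    apply kL_cont. }
  assert (HFc : forall y, A - dl < y < X + dl -> continuous F y).
  { intros y Hy. unfold F. apply cplus. apply cmult; [|apply cconst]. apply cmult; [|apply cconst].
    apply (ccomp (fun y => y - A) (fun v => rpow v th)). apply cminus. apply cid. apply cconst. apply rpow_cont; lra.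
    apply cmult. apply cconst. eapply derive_cont. apply HdF; auto. }
  assert (E : F X - F A = rpow DL th * f A / th + rpow DL th * RInt kL 0 1).
  { unfold F. replace ((X - A) / DL) with 1 by (unfold DL; field; lra). replace (A - A) with 0 by ring.
    replace (0 / DL) with 0 by (field; lra). rewrite RInt_point, rpow_0 by lra. fold DL. unfold zero; simpl. field. lra. }
  rewrite (ImpInt_val _ _ _ (F X - F A)). rewrite E. field. lra. auto.
  apply L_imp; auto. apply HFc; lra. apply HFc; lra.
  intros z Hz. split.
  - unfold F. apply (dl_eq _ _ ((th * rpow (z - A) (th - 1) * (1 - 0)) * f A * / th + rpow (z - A) th * f A * 0 + (0 * RInt kL 0 ((z - A) / DL) + rpow DL th * (kL ((z - A) / DL) * / DL)))).
    + unfold kL. replace (A + (z - A) / DL * DL) with z by (field; lra).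
      rewrite rpow_div by lra. rewrite (rpow_pred DL th) by lra.
      assert (rpow DL (th - 1) > 0) by (apply rpow_gt0; lra).
      assert (rpow (z - A) (th - 1) > 0) by (apply rpow_gt0; lra).
      field. repeat split; lra.
    + apply (dplus (fun y => rpow (y - A) th * f A / th) (fun y => rpow DL th * RInt kL 0 ((y - A) / DL))).
      * apply (dmult (fun y => rpow (y - A) th * f A) (fun _ => / th)); [|apply dconst].
        apply (dl_eq _ _ ((th * rpow (z - A) (th - 1) * (1 - 0)) * f A + rpow (z - A) th * 0)). ring.
        apply (dmult (fun y => rpow (y - A) th) (fun _ => f A)); [|apply dconst].
        apply (dl_eq _ _ ((th * rpow (z - A) (th - 1)) * (1 - 0))). ring.
        apply (dcomp (fun y => y - A) (fun v => rpow v th)). apply (dminus (fun y => y) (fun _ => A)). apply did. apply dconst.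
        apply drpow; lra.
      * apply (dmult (fun _ => rpow DL th) (fun y => RInt kL 0 ((y - A) / DL))). apply dconst. apply HdF; lra.
  - apply cmult. apply (ccomp (fun y => y - A) (fun v => rpow v (th - 1))). apply cminus. apply cid. apply cconst.
    apply rpow_cont_pos; lra. apply f_cont; lra.
Qed.

End JEval.

Section JEvalR.
Variables (f f' : R -> R) (th X B dl : R).
Hypothesis Hth : 0 < th.
Hypothesis HXB : X < B.
Hypothesis Hdl : 0 < dl.
Hypothesis Hf : forall s, X - dl < s < B + dl -> derivable_pt_lim f s (f' s).

Lemma f_contR s : X - dl < s < B + dl -> continuous f s.
Proof. intros. eapply derive_cont. apply Hf; auto. Qed.

Definition DR := B - X.
Definition kR u := rpow u (th - 1) * (f (B - u * DR) - f B).

Lemma DR_pos : 0 < DR. Proof. unfold DR; lra. Qed.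

Lemma kR_cont z : - dl / DR < z < 1 + dl / DR -> continuous kR z.
Proof. intros Hz. assert (HD := DR_pos).
  assert (Hr : X - dl < B - z * DR < B + dl).
  { assert (Hz1 : - dl < z * DR). { replace (- dl) with (- dl / DR * DR) by (field; lra). apply Rmult_lt_compat_r; lra. }
    assert (Hz2 : z * DR < DR + dl). { replace (DR + dl) with ((1 + dl / DR) * DR) by (field; lra). apply Rmult_lt_compat_r; lra. }
    unfold DR in *; lra. }
  assert (Hc : continuous (fun u => f (B - u * DR) - f B) z).
  { apply cminus; [|apply cconst]. apply (ccomp (fun u => B - u * DR) f).
    apply cminus. apply cconst. apply cmult. apply cid. apply cconst. apply f_contR; auto. }
  destruct (Req_dec z 0) as [->|Hz0].
  - unfold kR. apply kcont; auto. rewrite Rmult_0_l, Rminus_0_r. ring.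
    destruct (dlip f B (f' B) (Hf B ltac:(lra))) as [d [Hd0 Hl]].
    exists ((Rabs (f' B) + 1) * DR), (d / DR). split. apply Rdiv_lt_0_compat; auto.
    intros u Hu. eapply Rle_trans. apply Hl. replace (B - u * DR - B) with (- (u * DR)) by ring.
    rewrite Rabs_Ropp, Rabs_mult, (Rabs_right DR) by lra.
    apply Rmult_lt_compat_r with (r := DR) in Hu; auto. replace (d / DR * DR) with d in Hu by (field; lra). lra.
    right. replace (B - u * DR - B) with (- (u * DR)) by ring. rewrite Rabs_Ropp, Rabs_mult, (Rabs_right DR) by lra. ring.
  - unfold kR. apply cmult; auto. apply rpow_cont_ne0; auto.
Qed.

Lemma Jright_eval : th * ImpInt (fun s => rpow (B - s) (th - 1) * f s) X B =
  rpow DR th * f B + th * rpow DR th * RInt kR 0 1.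
Proof.
  assert (HD := DR_pos).
  assert (Hdd : 0 < dl / DR) by (apply Rdiv_lt_0_compat; auto).
  set (F := fun y => (0 - rpow (B - y) th * f B / th) - rpow DR th * RInt kR 0 ((B - y) / DR)).
  assert (HdF : forall y, X - dl < y < B + dl -> derivable_pt_lim (fun y => RInt kR 0 ((B - y) / DR)) y (kR ((B - y) / DR) * ((0 - 1) * / DR + (B - y) * 0))).
  { intros y Hy. apply (dcomp (fun y => (B - y) / DR) (fun v => RInt kR 0 v)).
    apply (dmult (fun y => B - y) (fun _ => / DR)). apply (dminus (fun _ => B) (fun y => y)). apply dconst. apply did. apply dconst.
    apply (dRInt_loc kR (- dl / DR) (1 + dl / DR)).
    split. unfold Rdiv. rewrite Ropp_mult_distr_l_reverse. apply Ropp_lt_gt_0_contravar in Hdd. unfold Rdiv in Hdd. lra. lra.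
    split. apply Rmult_lt_reg_r with DR; auto. replace (- dl / DR * DR) with (- dl) by (field; lra).
    replace ((B - y) / DR * DR) with (B - y) by (field; lra). lra.
    apply Rmult_lt_reg_r with DR; auto. replace ((1 + dl / DR) * DR) with (DR + dl) by (field; lra).
    replace ((B - y) / DR * DR) with (B - y) by (field; lra). unfold DR; lra.
    apply kR_cont. }
  assert (HFc : forall y, X - dl < y < B + dl -> continuous F y).
  { intros y Hy. unfold F. apply cminus. apply cminus. apply cconst. apply cmult; [|apply cconst]. apply cmult; [|apply cconst].
    apply (ccomp (fun y => B - y) (fun v => rpow v th)). apply cminus. apply cconst. apply cid. apply rpow_cont; lra.
    apply cmult. apply cconst. eapply derive_cont. apply HdF; auto. }
  assert (E : F B - F X = rpow DR th * f B / th + rpow DR th * RInt kR 0 1).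
  { unfold F. replace ((B - X) / DR) with 1 by (unfold DR; field; lra). replace (B - B) with 0 by ring.
    replace (0 / DR) with 0 by (field; lra). rewrite RInt_point, rpow_0 by lra. fold DR. unfold zero; simpl. field. lra. }
  rewrite (ImpInt_val _ _ _ (F B - F X)). rewrite E. field. lra. auto.
  apply L_imp; auto. apply HFc; lra. apply HFc; lra.
  intros z Hz. split.
  - unfold F.
    apply (dl_eq _ _ ((0 - ((((th * rpow (B - z) (th - 1)) * (0 - 1)) * f B + rpow (B - z) th * 0) * / th + rpow (B - z) th * f B * 0))
       - (0 * RInt kR 0 ((B - z) / DR) + rpow DR th * (kR ((B - z) / DR) * ((0 - 1) * / DR + (B - z) * 0))))).
    + unfold kR. replace (B - (B - z) / DR * DR) with z by (field; lra).
      rewrite rpow_div by lra. rewrite (rpow_pred DR th) by lra.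
      assert (rpow DR (th - 1) > 0) by (apply rpow_gt0; lra).
      assert (rpow (B - z) (th - 1) > 0) by (apply rpow_gt0; lra).
      field. repeat split; lra.
    + apply (dminus (fun y => 0 - rpow (B - y) th * f B / th) (fun y => rpow DR th * RInt kR 0 ((B - y) / DR))).
      * apply (dminus (fun _ => 0) (fun y => rpow (B - y) th * f B / th)). apply dconst.
        apply (dmult (fun y => rpow (B - y) th * f B) (fun _ => / th)); [|apply dconst].
        apply (dmult (fun y => rpow (B - y) th) (fun _ => f B)); [|apply dconst].
        apply (dl_eq _ _ ((th * rpow (B - z) (th - 1)) * (0 - 1))). ring.
        apply (dcomp (fun y => B - y) (fun v => rpow v th)). apply (dminus (fun _ => B) (fun y => y)). apply dconst. apply did.
        apply drpow; lra.
      * apply (dmult (fun _ => rpow DR th) (fun y => RInt kR 0 ((B - y) / DR))). apply dconst. apply HdF; lra.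
  - apply cmult. apply (ccomp (fun y => B - y) (fun v => rpow v (th - 1))). apply cminus. apply cconst. apply cid.
    apply rpow_cont_pos; lra. apply f_contR; lra.
Qed.

End JEvalR.


Lemma region (I : R -> Prop) (l r : R) : is_interval I -> l < r -> interior I l -> interior I r ->
  exists dl, 0 < dl /\ forall s, l - dl < s < r + dl -> interior I s.
Proof.
  intros HI Hlr [d1 H1] [d2 H2]. exists (Rmin d1 d2). split. apply Rmin_pos; apply cond_pos.
  intros s Hs. assert (Hm1 := Rmin_l d1 d2). assert (Hm2 := Rmin_r d1 d2).
  assert (Il : I l) by (apply H1; unfold disc; rewrite Rminus_diag, Rabs_R0; apply cond_pos).
  assert (Ir : I r) by (apply H2; unfold disc; rewrite Rminus_diag, Rabs_R0; apply cond_pos).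
  assert (Hd : 0 < Rmin (s - (l - Rmin d1 d2)) (r + Rmin d1 d2 - s)) by (apply Rmin_pos; lra).
  exists (mkposreal _ Hd). intros y Hy. unfold disc in Hy; simpl in Hy. apply Rabs_def2 in Hy.
  assert (Hm3 := Rmin_l (s - (l - Rmin d1 d2)) (r + Rmin d1 d2 - s)).
  assert (Hm4 := Rmin_r (s - (l - Rmin d1 d2)) (r + Rmin d1 d2 - s)).
  destruct (Rle_lt_dec y l).
  - apply H1. unfold disc. rewrite Rabs_left1 by lra. lra.
  - destruct (Rle_lt_dec r y).
    + apply H2. unfold disc. rewrite Rabs_right by lra. lra.
    + apply (HI l y r); auto; lra.
Qed.

Lemma rpow_succ z th : 0 < th -> 0 <= z -> rpow z (th + 1) = rpow z th * z.
Proof. intros Ht Hz. destruct (Rle_lt_or_eq_dec 0 z Hz) as [H|<-].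
  rewrite rpow_plus, rpow_1 by lra. ring.
  rewrite Rmult_0_r. apply rpow_0. lra. Qed.

Section Claims.
Variables (I : R -> Prop) (f f' : R -> R) (m alpha a b q p x th dl : R).
Hypothesis Hm : 0 < m <= 1.
Hypothesis Halpha : 0 <= alpha <= 1.
Hypothesis Hab : a < b.
Hypothesis Ha0 : 0 <= a.
Hypothesis Hdl : 0 < dl.
Hypothesis Hder : forall s, m * a - dl < s < b + dl -> derivable_pt_lim f s (f' s).
Hypothesis Hconv : alpha_m_convex alpha m (fun z => m * a <= z <= b) (fun z => rpow (Rabs (f' z)) q).
Hypothesis Hq : 1 < q.
Hypothesis Hp : p = q / (q - 1).
Hypothesis Hx : a <= x <= b.
Hypothesis Hth : 0 < th.

Definition Bt := rpow (/ th * Beta (p + 1) (/ th)) (/ p).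

Lemma p_gt1 : 1 < p.
Proof. rewrite Hp. apply Rmult_lt_reg_r with (q - 1). lra.
  unfold Rdiv. rewrite Rmult_assoc, Rinv_l by lra. lra. Qed.

Lemma Bt_eq : rpow (RInt (kb th p) 0 1) (/ p) = Bt.
Proof. unfold Bt. rewrite Beta_val by (try lra; assert (H := p_gt1); lra). rewrite <- Rmult_assoc, Rinv_l, Rmult_1_l by lra. reflexivity. Qed.

Lemma Gamma_nz : Gamma th <> 0.
Proof. rewrite (Gamma0 th Hth). assert (H := L1_pos th Hth). apply Rgt_not_eq.
  apply Rdiv_lt_0_compat; auto. Qed.

Lemma Bt_ge0 : 0 <= Bt. Proof. apply rpow_ge0. Qed.

Lemma fprime_bound (X Y u : R) : m * a <= X <= b -> m * a <= Y <= b -> 0 <= u <= 1 ->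
  m * a <= u * X + m * (1 - u) * Y <= b ->
  Rabs (f' (u * X + m * (1 - u) * Y)) <= hh alpha m (rpow (Rabs (f' X)) q) (rpow (Rabs (f' Y)) q) q u.
Proof. intros HX HY Hu HK. assert (H := Hconv X Y u HX HY Hu HK).
  unfold hh, inner. rewrite <- (rpow_inv_pow (Rabs (f' (u * X + m * (1 - u) * Y))) q) by (try apply Rabs_pos; lra).
  apply rpow_le_base. left; apply Rinv_0_lt_compat; lra. split. apply rpow_ge0. exact H. Qed.

Lemma claimL : exists VL,
  Gamma (th + 1) / (rpow m th * (b - a)) * Jleft th f (m * a) (m * x) = (rpow (x - a) th * f (m * a) + VL) / (b - a) /\
  Rabs VL <= m * Bt * (rpow (x - a) (th + 1) *
     rpow ((rpow (Rabs (f' (m * x))) q + alpha * m * rpow (Rabs (f' a)) q) / (alpha + 1)) (/ q)).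
Proof.
  assert (HBt := Bt_ge0).
  assert (Hmt : 0 < rpow m th) by (apply rpow_gt0; lra).
  assert (HG := Gamma_nz).
  assert (HZ : 0 <= m * Bt * (rpow (x - a) (th + 1) *
     rpow ((rpow (Rabs (f' (m * x))) q + alpha * m * rpow (Rabs (f' a)) q) / (alpha + 1)) (/ q))).
  { apply Rmult_le_pos. apply Rmult_le_pos; lra. apply Rmult_le_pos; apply rpow_ge0. }
  destruct (Req_dec x a) as [->|Hxa].
  - exists 0. split; [|rewrite Rabs_R0; auto].
    unfold Jleft. destruct (Rlt_dec (m * a) (m * a)); [lra|].
    rewrite Rminus_diag, rpow_0 by lra. field. lra.
  - assert (Hax : a < x) by lra.
    assert (HAX : m * a < m * x) by nra.
    set (A := m * a). set (X := m * x). set (D := DL A X).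
    assert (HD : D = m * (x - a)) by (unfold D, DL, A, X; ring).
    assert (HDp : 0 < D) by (rewrite HD; nra).
    exists (rpow (x - a) th * (th * RInt (kL f th A X) 0 1)). split.
    + unfold Jleft. fold A X. destruct (Rlt_dec A X); [|unfold A, X in *; lra].
      replace (Gamma (th + 1) / (rpow m th * (b - a)) * (/ Gamma th * ImpInt (fun s => rpow (s - A) (th - 1) * f s) A X))
        with ((Gamma (th + 1) * / Gamma th) * (th * ImpInt (fun s => rpow (s - A) (th - 1) * f s) A X) / (th * rpow m th * (b - a)))
        by (field; repeat split; lra).
      rewrite Gamma_ratio by auto.
      rewrite (Jleft_eval f f' th A X dl) by (auto; intros; apply Hder; unfold A, X in *; nra).
      fold D. rewrite HD, rpow_mult_distr by lra. field. repeat split; lra.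
    + rewrite Rabs_mult, (Rabs_right (rpow (x - a) th)) by (apply Rle_ge, rpow_ge0).
      set (phi := fun u => f (A + u * D)).
      assert (Hphi0 : phi 0 = f A) by (unfold phi; f_equal; ring).
      assert (Hc := core th alpha m (rpow (Rabs (f' (m * x))) q) (rpow (Rabs (f' a)) q) q p D
        Hth Halpha Hm ltac:(apply rpow_ge0) ltac:(apply rpow_ge0) Hq Hp ltac:(lra) phi (fun u => D * f' (A + u * D))).
      rewrite Hphi0 in Hc. rewrite Bt_eq in Hc.
      assert (Hreg : forall u, 0 <= u <= 1 -> m * a <= A + u * D <= m * x).
      { intros u Hu. unfold A. rewrite HD. nra. }
      assert (Hmx : m * x <= b) by nra.
      assert (Hma : m * a <= a) by nra.
      specialize (Hc ltac:(intros u Hu; unfold phi; apply (dl_eq _ _ (f' (A + u * D) * (0 + (1 * D + u * 0)))); [ring|];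
          apply (dcomp (fun u => A + u * D) f); [apply (dplus (fun _ => A) (fun u => u * D)); [apply dconst|];
          apply (dl_eq _ _ (1 * D + u * 0)); [ring|]; apply (dmult (fun u => u) (fun _ => D)); [apply did|apply dconst]|];
          apply Hder; specialize (Hreg u Hu); lra)).
      specialize (Hc ltac:(intros u Hu; rewrite Rabs_mult, (Rabs_right D) by lra; apply Rmult_le_compat_l; [lra|];
          replace (A + u * D) with (u * (m * x) + m * (1 - u) * a) by (unfold A; rewrite HD; ring);
          apply fprime_bound; try lra; (split; [nra|]); nra)).
      eapply Rle_trans. apply Rmult_le_compat_l. apply rpow_ge0. exact Hc.
      rewrite HD, (rpow_succ (x - a) th) by lra. right. unfold X. ring.
Qed.

Lemma claimR : exists VR,
  Gamma (th + 1) / (rpow m th * (b - a)) * Jright th f (m * x) (m * b) = (rpow (b - x) th * f (m * b) + VR) / (b - a) /\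
  Rabs VR <= m * Bt * (rpow (b - x) (th + 1) *
     rpow ((rpow (Rabs (f' (m * x))) q + alpha * m * rpow (Rabs (f' b)) q) / (alpha + 1)) (/ q)).
Proof.
  assert (HBt := Bt_ge0).
  assert (Hmt : 0 < rpow m th) by (apply rpow_gt0; lra).
  assert (HG := Gamma_nz).
  assert (HZ : 0 <= m * Bt * (rpow (b - x) (th + 1) *
     rpow ((rpow (Rabs (f' (m * x))) q + alpha * m * rpow (Rabs (f' b)) q) / (alpha + 1)) (/ q))).
  { apply Rmult_le_pos. apply Rmult_le_pos; lra. apply Rmult_le_pos; apply rpow_ge0. }
  destruct (Req_dec x b) as [->|Hxb].
  - exists 0. split; [|rewrite Rabs_R0; auto].
    unfold Jright. destruct (Rlt_dec (m * b) (m * b)); [lra|].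
    rewrite Rminus_diag, rpow_0 by lra. field. lra.
  - assert (Hxb' : x < b) by lra.
    assert (HXB : m * x < m * b) by nra.
    set (X := m * x). set (B := m * b). set (D := DR X B).
    assert (HD : D = m * (b - x)) by (unfold D, DR, B, X; ring).
    assert (HDp : 0 < D) by (rewrite HD; nra).
    exists (rpow (b - x) th * (th * RInt (kR f th X B) 0 1)). split.
    + unfold Jright. fold X B. destruct (Rlt_dec X B); [|unfold B, X in *; lra].
      replace (Gamma (th + 1) / (rpow m th * (b - a)) * (/ Gamma th * ImpInt (fun s => rpow (B - s) (th - 1) * f s) X B))
        with ((Gamma (th + 1) * / Gamma th) * (th * ImpInt (fun s => rpow (B - s) (th - 1) * f s) X B) / (th * rpow m th * (b - a)))
        by (field; repeat split; lra).
      rewrite Gamma_ratio by auto.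
      rewrite (Jright_eval f f' th X B dl) by (auto; intros; apply Hder; unfold B, X in *; nra).
      fold D. rewrite HD, rpow_mult_distr by lra. field. repeat split; lra.
    + rewrite Rabs_mult, (Rabs_right (rpow (b - x) th)) by (apply Rle_ge, rpow_ge0).
      set (phi := fun u => f (B - u * D)).
      assert (Hphi0 : phi 0 = f B) by (unfold phi; f_equal; ring).
      assert (Hc := core th alpha m (rpow (Rabs (f' (m * x))) q) (rpow (Rabs (f' b)) q) q p D
        Hth Halpha Hm ltac:(apply rpow_ge0) ltac:(apply rpow_ge0) Hq Hp ltac:(lra) phi (fun u => - D * f' (B - u * D))).
      rewrite Hphi0 in Hc. rewrite Bt_eq in Hc.
      assert (Hreg : forall u, 0 <= u <= 1 -> m * x <= B - u * D <= m * b).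
      { intros u Hu. unfold B. rewrite HD. nra. }
      assert (Hmb : m * b <= b) by nra.
      assert (Hma : m * a <= m * x) by nra.
      specialize (Hc ltac:(intros u Hu; unfold phi; apply (dl_eq _ _ (f' (B - u * D) * (0 - (1 * D + u * 0)))); [ring|];
          apply (dcomp (fun u => B - u * D) f); [apply (dminus (fun _ => B) (fun u => u * D)); [apply dconst|];
          apply (dl_eq _ _ (1 * D + u * 0)); [ring|]; apply (dmult (fun u => u) (fun _ => D)); [apply did|apply dconst]|];
          apply Hder; specialize (Hreg u Hu); lra)).
      specialize (Hc ltac:(intros u Hu; rewrite Rabs_mult, Rabs_Ropp, (Rabs_right D) by lra; apply Rmult_le_compat_l; [lra|];
          replace (B - u * D) with (u * (m * x) + m * (1 - u) * b) by (unfold B; rewrite HD; ring);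
          apply fprime_bound; try lra; (split; [nra|]); nra)).
      eapply Rle_trans. apply Rmult_le_compat_l. apply rpow_ge0. exact Hc.
      rewrite HD, (rpow_succ (b - x) th) by lra. right. unfold X. ring.
Qed.

End Claims.


Lemma fin (A1 A2 VL VR D c T1 T2 : R) : 0 < D -> Rabs VL <= c * T1 -> Rabs VR <= c * T2 ->
  Rabs ((A1 + A2) / D - ((A1 + VL) / D + (A2 + VR) / D)) <= c / D * (T1 + T2).
Proof. intros HD H1 H2.
  replace ((A1 + A2) / D - ((A1 + VL) / D + (A2 + VR) / D)) with (- (VL + VR) * / D) by (field; lra).
  rewrite Rabs_mult, Rabs_Ropp, (Rabs_right (/ D)) by (apply Rle_ge; left; apply Rinv_0_lt_compat; auto).
  replace (c / D * (T1 + T2)) with ((c * T1 + c * T2) * / D) by (field; lra).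
  apply Rmult_le_compat_r. left; apply Rinv_0_lt_compat; auto.
  eapply Rle_trans. apply Rabs_triang. lra. Qed.
Theorem mainTheorem13
  (I : R -> Prop) (f f' : R -> R) (m alpha a b q p : R)
  (HI : is_interval I) (HIpos : forall z, I z -> 0 <= z)
  (Hder : forall z, interior I z -> derivable_pt_lim f z (f' z))
  (Hm : 0 < m <= 1) (Halpha : 0 <= alpha <= 1)
  (Hab : a < b) (Hma : interior I (m * a)) (Hb : interior I b)
  (Hconv : alpha_m_convex alpha m (fun z => m * a <= z <= b)
             (fun z => rpow (Rabs (f' z)) q))
  (Hq : 1 < q) (Hp : p = q / (q - 1)) :
  forall x theta, a <= x <= b -> 0 < theta ->
    Rabs ((rpow (x - a) theta * f (m * a) + rpow (b - x) theta * f (m * b)) / (b - a)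
          - Gamma (theta + 1) / (rpow m theta * (b - a))
            * (Jleft theta f (m * a) (m * x) + Jright theta f (m * x) (m * b)))
    <= m * rpow (/ theta * Beta (p + 1) (/ theta)) (/ p) / (b - a)
       * (rpow (x - a) (theta + 1)
            * rpow ((rpow (Rabs (f' (m * x))) q + alpha * m * rpow (Rabs (f' a)) q)
                    / (alpha + 1)) (/ q)
          + rpow (b - x) (theta + 1)
            * rpow ((rpow (Rabs (f' (m * x))) q + alpha * m * rpow (Rabs (f' b)) q)
                    / (alpha + 1)) (/ q)).

Proof.
  intros x th Hx Hth.
  assert (HIma : I (m * a)).
  { destruct Hma as [d Hd]. apply Hd. unfold disc. rewrite Rminus_diag, Rabs_R0. apply cond_pos. }
  assert (Ha0 : 0 <= a). { assert (H := HIpos _ HIma). nra. }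
  assert (Hmab : m * a < b) by nra.
  destruct (region I (m * a) b HI Hmab Hma Hb) as [dl [Hdl Hreg]].
  assert (Hder' : forall s, m * a - dl < s < b + dl -> derivable_pt_lim f s (f' s)).
  { intros s Hs. apply Hder. apply Hreg; auto. }
  destruct (claimL f f' m alpha a b q p x th dl) as [VL [EL HL]]; auto.
  destruct (claimR f f' m alpha a b q p x th dl) as [VR [ER HR]]; auto.
  rewrite Rmult_plus_distr_l, EL, ER. unfold Bt in *.
  apply fin; auto. lra.
Qed.
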